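(* $\mathrm P\colon\mathcal X_n\to\mathcal P$ is a well-defined functor (in particular $\mathrm P(\mathbb X)$ is a Priestley space and $\mathrm P(\varphi)$ is a continuous order-preserving map for every object $\mathbb X$ and morphism $\varphi$ of $\mathcal X_n$). Moreover, for every $\mathbf A\in\mathcal V_n$, letting $\mathbf A^\flat=\langle A;\wedge,\vee,\mathbf f_0,\mathbf t_0\rangle$ be its bounded-distributive-lattice reduct, the Priestley space $\mathrm H(\mathbf A^\flat)$ is isomorphic to $\mathrm P(\mathrm D(\mathbf A))$.
   Context: Fix an integer $n\ge 1$; $[m,p]=\{i\in\mathbb Z:m\le i\le p\}$. Algebras have signature $(\otimes,\oplus,\wedge,\vee,\neg,\top,\mathbf f_0,\dots,\mathbf f_n,\mathbf t_0,\dots,\mathbf t_n,\bot)$. The algebra $\mathbf M_0$ has universe $\{\top^0,\mathbf f^0,\mathbf t^0,\bot^0\}$; its knowledge order has $\bot^0<\mathbf f^0<\top^0$, $\bot^0<\mathbf t^0<\top^0$ ($\mathbf f^0,\mathbf t^0$ incomparable) and its truth order has $\mathbf f^0<\top^0<\mathbf t^0$, $\mathbf f^0<\bot^0<\mathbf t^0$ ($\top^0,\bot^0$ incomparable); $\otimes,\oplus$ are meet and join in the knowledge order, $\wedge,\vee$ meet and join in the truth order; $\neg$ swaps $\mathbf f^0,\mathbf t^0$ and fixes $\top^0,\bot^0$; $\top,\bot$ denote $\top^0,\bot^0$, every $\mathbf f_i$ denotes $\mathbf f^0$ and every $\mathbf t_i$ denotes $\mathbf t^0$. For $k\in[1,n]$,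 $\mathbf M_k$ has universe $\{\top^k,\bot^k,\mathbf f^k,\mathbf t^k,\mathbf 0^k,\mathbf 1^k\}$, knowledge order generated by $\bot^k<\mathbf f^k<\mathbf 0^k<\top^k$ and $\bot^k<\mathbf t^k<\mathbf 1^k<\top^k$, truth order generated by $\mathbf 0^k<\mathbf f^k<\top^k<\mathbf t^k<\mathbf 1^k$ and $\mathbf f^k<\bot^k<\mathbf t^k$ ($\top^k,\bot^k$ incomparable), $\otimes,\oplus,\wedge,\vee$ as before, $\neg$ swapping $\mathbf f^k\leftrightarrow\mathbf t^k$, $\mathbf 0^k\leftrightarrow\mathbf 1^k$ and fixing $\top^k,\bot^k$; $\top,\bot$ denote $\top^k,\bot^k$, $\mathbf f_i$ denotes $\mathbf 0^k$ for $i<k$ and $\mathbf f^k$ for $i\ge k$, $\mathbf t_i$ denotes $\mathbf 1^k$ for $i<k$ and $\mathbf t^k$ for $i\ge k$. $\mathcal V_n$ is the class of algebras isomorphic to subalgebras of products of copies of $\mathbf M_0,\dots,\mathbf M_n$ (this is the variety generated by the default bilattice $\mathbf J_n$). Let $g_k\colon\mathbf M_k\to\mathbf M_0$ ($k\in[1,n]$) be the homomorphism $\top^k\mapsto\top^0$, $\bot^k\mapsto\bot^0$, $\mathbf f^k,\mathbf 0^k\mapsto\mathbf f^0$, $\mathbf t^k,\mathbf 1^k\mapsto\mathbf t^0$. Relations: $\leqslant^0$ is the knowledge order of $\mathbf M_0$; for $k\in[1,n]$, $\leqslant^k$ is the order on $M_k$ whose only strict comparabilities are $\mathbf f^k<\mathbf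 0^k$, $\mathbf t^k<\mathbf 1^k$; for $1\le j<k\le n$, ${\leqslant^{jk}}=\{(\top^j,\top^k),(\bot^j,\bot^k),(\mathbf f^j,\mathbf f^k),(\mathbf f^j,\mathbf 0^k),(\mathbf 0^j,\mathbf 0^k),(\mathbf t^j,\mathbf t^k),(\mathbf t^j,\mathbf 1^k),(\mathbf 1^j,\mathbf 1^k)\}$. $\underset{\sim}{\mathbf M}_n$ is the multi-sorted structure with sorts $M_0,\dots,M_n$, operations $g_k$, relations $\leqslant^k$, $\leqslant^{jk}$, discrete topologies. Multi-sorted topological structures $\mathbb X$ in this signature have disjoint topological sorts $X_0,\dots,X_n$ (disjoint-union topology on $X=X_0\cup\dots\cup X_n$), maps $g_k\colon X_k\to X_0$, relations $\leqslant^k\subseteq X_k^2$, $\leqslant^{jk}\subseteq X_j\times X_k$; morphisms are continuous sort-preserving maps preserving operations and relations. $\mathcal X_n$ is the category of structures isomorphic to topologically closed substructures of non-empty powers $\underset{\sim}{\mathbf M}_n^S$ (sortwise powers, pointwise structure, product topology), with these morphisms. For $\mathbf A\in\mathcal V_n$, $\mathrm D(\mathbf A)\in\mathcal X_n$ has sorts $X_k=\{\text{homomorphisms }\mathbf A\to\mathbf M_k\}$ with the topology inherited from $M_k^A$, $g_k(x)=g_k\circ x$, and relations defined pointwise ($x\leqslant^{jk}y$ iff $x(a)\leqslant^{jk}y(a)$ for all $a\in A$). For $\mathbb X\in\mathcal X_n$, let $X=X_0\cup\dots\cup X_n$, define $\le$ on $X$ by $x\le y$ iff either $x,y\in X_k$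 and $x\leqslant^k y$ for some $k\in[0,n]$, or $x\in X_j$, $y\in X_k$, $x\leqslant^{jk}y$ for some $1\le j<k\le n$, and let $g\colon X\to X$ be $g_k$ on $X_k$ ($k\ge1$) and the identity on $X_0$. Then $\mathrm P(\mathbb X)=\langle X\,\dot\cup\,\widehat X;\preccurlyeq,\mathscr T\rangle$ where $\widehat X=\{\widehat x\mid x\in X\}$ is a disjoint copy of $X$, $\mathscr T$ is the disjoint-union topology, and $\preccurlyeq$ is given by: (1) for $x,y\in X$: $x\preccurlyeq y$ iff $x\le y$; (2) $\widehat x\preccurlyeq\widehat y$ iff $x\ge y$; (3) for $x\in X\setminus X_0$, $y\in X_0$: $x\preccurlyeq y$ iff $g(x)\le y$; (4) for $x\in X\setminus X_0$, $\widehat y\in\widehat X_0$: $x\preccurlyeq\widehat y$ iff $g(x)\ge y$; (5) for $x\in X_0$, $\widehat y\in\widehat X\setminus\widehat X_0$: $x\preccurlyeq\widehat y$ iff $x\le g(y)$; (6) for $\widehat x\in\widehat X_0$, $\widehat y\in\widehat X\setminus\widehat X_0$: $\widehat x\preccurlyeq\widehat y$ iff $x\ge g(y)$; (7) for $x\in X\setminus X_0$, $\widehat y\in\widehat X\setminus\widehat X_0$: $x\preccurlyeq\widehat y$ iff $g(x)\le g(y)$ or $g(x)\ge g(y)$; no other pairs are related. For a morphism $\varphi$, $\mathrm P(\varphi)(x)=\varphi(x)$ and $\mathrm P(\varphi)(\widehat x)=\widehat{\varphi(x)}$. $\mathcal P$ is the category of Priestley spaces (compact, totally order-disconnected ordered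 topological spaces) with continuous order-preserving maps. For a bounded distributive lattice $\mathbf L$, $\mathrm H(\mathbf L)$ is the set of bounded lattice homomorphisms $\mathbf L\to\{0,1\}$ with the pointwise order and the topology inherited from $\{0,1\}^L$ (discrete $\{0,1\}$). Isomorphism of Priestley spaces means order-isomorphism that is a homeomorphism. *)

(* Defs.v *)
From mathcomp Require Import all_boot.
From Stdlib Require List.
Set Implicit Arguments.
Unset Strict Implicit.
Unset Printing Implicit Defensive.

Definition is_topology {T : Type} (opn : (T -> Prop) -> Prop) : Prop :=
  opn (fun _ => True) /\
  (forall F : (T -> Prop) -> Prop, (forall U, F U -> opn U) ->
      opn (fun x => exists U, F U /\ U x)) /\
  (forall U V, opn U -> opn V -> opn (fun x => U x /\ V x)).

Definition continuous {A B : Type} (oA : (A -> Prop) -> Prop)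
  (oB : (B -> Prop) -> Prop) (f : A -> B) : Prop :=
  forall V, oB V -> oA (fun x => V (f x)).

(** product topology on [S -> D] with [D] discrete *)
Definition prod_open (S D : Type) (U : (S -> D) -> Prop) : Prop :=
  forall x, U x -> exists l : list S,
    forall y, (forall s, List.In s l -> y s = x s) -> U y.

Definition sub_open {T : Type} (P : T -> Prop) (opn : (T -> Prop) -> Prop)
  (V : {x : T | P x} -> Prop) : Prop :=
  exists U, opn U /\ forall z, V z <-> U (proj1_sig z).

Arguments sub_open {T} P opn V.

Record OSpace := MkOSpace {
  os_car : Type;
  os_open : (os_car -> Prop) -> Prop;
  os_le : os_car -> os_car -> Prop }.
Arguments os_open : clear implicits.
Arguments os_le : clear implicits.

Definition os_compact (X : OSpace) : Prop :=
  forall F : (os_car X -> Prop) -> Prop,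
    (forall U, F U -> os_open X U) ->
    (forall x, exists U, F U /\ U x) ->
    exists l : list (os_car X -> Prop),
      (forall U, List.In U l -> F U) /\ (forall x, exists U, List.In U l /\ U x).

Definition os_partial_order (X : OSpace) : Prop :=
  (forall x, os_le X x x) /\
  (forall x y, os_le X x y -> os_le X y x -> x = y) /\
  (forall x y z, os_le X x y -> os_le X y z -> os_le X x z).

Definition os_clopen_up (X : OSpace) (U : os_car X -> Prop) : Prop :=
  os_open X U /\ os_open X (fun x => ~ U x) /\
  (forall x y, U x -> os_le X x y -> U y).

Arguments os_clopen_up : clear implicits.

Definition os_TOD (X : OSpace) : Prop :=
  forall x y, ~ os_le X x y -> exists U, os_clopen_up X U /\ U x /\ ~ U y.

Definition Priestley (X : OSpace) : Prop :=
  is_topology (os_open X) /\ os_partial_order X /\ os_compact X /\ os_TOD X.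

Definition os_continuous (X Y : OSpace) (f : os_car X -> os_car Y) : Prop :=
  continuous (os_open X) (os_open Y) f.

Definition os_monotone (X Y : OSpace) (f : os_car X -> os_car Y) : Prop :=
  forall x y, os_le X x y -> os_le Y (f x) (f y).

Definition os_iso (X Y : OSpace) : Prop :=
  exists (f : os_car X -> os_car Y) (g : os_car Y -> os_car X),
    cancel f g /\ cancel g f /\ os_continuous f /\ os_continuous g /\
    (forall x y, os_le X x y <-> os_le Y (f x) (f y)).

(** * The algebras M_0, M_k *)

Inductive M4 := Top4 | Bot4 | F4 | T4.
Inductive M6 := Top6 | Bot6 | F6 | T6 | Zero6 | One6.

(** knowledge / truth orders of M_0 *)
Definition kle4 (x y : M4) : bool :=
  match x, y with
  | Bot4, _ | _, Top4 | F4, F4 | T4, T4 => true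
  | _, _ => false end.
Definition tle4 (x y : M4) : bool :=
  match x, y with
  | F4, _ | _, T4 | Top4, Top4 | Bot4, Bot4 => true
  | _, _ => false end.

(** knowledge / truth orders of M_k, k >= 1 *)
Definition kle6 (x y : M6) : bool :=
  match x, y with
  | Bot6, _ | _, Top6 => true
  | F6, (F6 | Zero6) | Zero6, Zero6 => true
  | T6, (T6 | One6) | One6, One6 => true
  | _, _ => false end.
Definition tle6 (x y : M6) : bool :=
  match x, y with
  | Zero6, _ | _, One6 => true
  | F6, (F6 | Top6 | Bot6 | T6) => true
  | Top6, (Top6 | T6) | Bot6, (Bot6 | T6) | T6, T6 => true
  | _, _ => false end.

(** meet/join in these (lattice) orders: if the arguments are comparable
    take the smaller/larger one, otherwise the given default (which is the
    actual meet/join of incomparable pairs in each case). *)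
Definition mk_meet {T : Type} (le : T -> T -> bool) (d : T) (x y : T) : T :=
  if le x y then x else if le y x then y else d.
Definition mk_join {T : Type} (le : T -> T -> bool) (d : T) (x y : T) : T :=
  if le x y then y else if le y x then x else d.

Definition neg4 (x : M4) : M4 :=
  match x with F4 => T4 | T4 => F4 | y => y end.
Definition neg6 (x : M6) : M6 :=
  match x with F6 => T6 | T6 => F6 | Zero6 => One6 | One6 => Zero6 | y => y end.

Definition Mcar (m : nat) : Type := match m with 0 => M4 | S _ => M6 end.

Definition Mkmeet (m : nat) : Mcar m -> Mcar m -> Mcar m :=
  match m as m0 return Mcar m0 -> Mcar m0 -> Mcar m0 with
  | 0 => mk_meet kle4 Bot4 | S _ => mk_meet kle6 Bot6 end.
Definition Mkjoin (m : nat) : Mcar m -> Mcar m -> Mcar m :=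
  match m as m0 return Mcar m0 -> Mcar m0 -> Mcar m0 with
  | 0 => mk_join kle4 Top4 | S _ => mk_join kle6 Top6 end.
Definition Mtmeet (m : nat) : Mcar m -> Mcar m -> Mcar m :=
  match m as m0 return Mcar m0 -> Mcar m0 -> Mcar m0 with
  | 0 => mk_meet tle4 F4 | S _ => mk_meet tle6 F6 end.
Definition Mtjoin (m : nat) : Mcar m -> Mcar m -> Mcar m :=
  match m as m0 return Mcar m0 -> Mcar m0 -> Mcar m0 with
  | 0 => mk_join tle4 T4 | S _ => mk_join tle6 T6 end.
Definition Mneg (m : nat) : Mcar m -> Mcar m :=
  match m as m0 return Mcar m0 -> Mcar m0 with
  | 0 => neg4 | S _ => neg6 end.
Definition Mtop (m : nat) : Mcar m :=
  match m as m0 return Mcar m0 with 0 => Top4 | S _ => Top6 end.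
Definition Mbot (m : nat) : Mcar m :=
  match m as m0 return Mcar m0 with 0 => Bot4 | S _ => Bot6 end.
(** f_i denotes 0^k if i < k, f^k if i >= k (and f^0 in M_0) *)
Definition Mf (m : nat) (i : nat) : Mcar m :=
  match m as m0 return Mcar m0 with
  | 0 => F4 | S m' => if (i < m'.+1)%N then Zero6 else F6 end.
Definition Mt (m : nat) (i : nat) : Mcar m :=
  match m as m0 return Mcar m0 with
  | 0 => T4 | S m' => if (i < m'.+1)%N then One6 else T6 end.

(** the homomorphisms g_k : M_k -> M_0 (g_0 := identity, never used as an operation) *)
Definition g6 (x : M6) : M4 :=
  match x with
  | Top6 => Top4 | Bot6 => Bot4 | F6 | Zero6 => F4 | T6 | One6 => T4 end.
Definition gM (m : nat) : Mcar m -> Mcar 0 :=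
  match m as m0 return Mcar m0 -> M4 with 0 => fun x => x | S _ => g6 end.

(** the relations: <=^0 (knowledge order of M_0), <=^k, <=^{jk} *)
Definition lek6 (x y : M6) : bool :=
  match x, y with
  | Top6, Top6 | Bot6, Bot6 | F6, F6 | T6, T6 | Zero6, Zero6 | One6, One6 => true
  | F6, Zero6 | T6, One6 => true
  | _, _ => false end.
Definition lejk6 (x y : M6) : bool :=
  match x, y with
  | Top6, Top6 | Bot6, Bot6 | F6, F6 | F6, Zero6 | Zero6, Zero6
  | T6, T6 | T6, One6 | One6, One6 => true
  | _, _ => false end.
Definition Mle (m : nat) : Mcar m -> Mcar m -> bool :=
  match m as m0 return Mcar m0 -> Mcar m0 -> bool with
  | 0 => kle4 | S _ => lek6 end.
(** only used for 1 <= j < k *)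
Definition Mlejk (j k : nat) : Mcar j -> Mcar k -> bool :=
  match j as j0, k as k0 return Mcar j0 -> Mcar k0 -> bool with
  | S _, S _ => lejk6
  | _, _ => fun _ _ => false end.

(** * Algebras of the signature (⊗,⊕,∧,∨,¬,⊤,f_0..f_n,t_0..t_n,⊥) *)

Record Alg (n : nat) := MkAlg {
  acar : Type;
  a_kmeet : acar -> acar -> acar;
  a_kjoin : acar -> acar -> acar;
  a_meet : acar -> acar -> acar;
  a_join : acar -> acar -> acar;
  a_neg : acar -> acar;
  a_top : acar;
  a_f : 'I_n.+1 -> acar;
  a_t : 'I_n.+1 -> acar;
  a_bot : acar }.
Arguments acar {n}.
Arguments a_kmeet {n}. Arguments a_kjoin {n}. Arguments a_meet {n}.
Arguments a_join {n}. Arguments a_neg {n}. Arguments a_top {n}.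
Arguments a_f {n}. Arguments a_t {n}. Arguments a_bot {n}.

Definition is_hom (n : nat) (A B : Alg n) (h : acar A -> acar B) : Prop :=
  (forall x y, h (a_kmeet A x y) = a_kmeet B (h x) (h y)) /\
  (forall x y, h (a_kjoin A x y) = a_kjoin B (h x) (h y)) /\
  (forall x y, h (a_meet A x y) = a_meet B (h x) (h y)) /\
  (forall x y, h (a_join A x y) = a_join B (h x) (h y)) /\
  (forall x, h (a_neg A x) = a_neg B (h x)) /\
  h (a_top A) = a_top B /\
  (forall i, h (a_f A i) = a_f B i) /\
  (forall i, h (a_t A i) = a_t B i) /\
  h (a_bot A) = a_bot B.
Arguments is_hom {n} A B h.

Definition Malg (n : nat) (k : 'I_n.+1) : Alg n :=
  @MkAlg n (Mcar k) (@Mkmeet k) (@Mkjoin k) (@Mtmeet k) (@Mtjoin k) (@Mneg k)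
    (Mtop k) (fun i => Mf k i) (fun i => Mt k i) (Mbot k).

Definition Mprod (n : nat) (I : Type) (c : I -> 'I_n.+1) : Alg n :=
  @MkAlg n (forall i, Mcar (c i))
    (fun x y i => Mkmeet (x i) (y i))
    (fun x y i => Mkjoin (x i) (y i))
    (fun x y i => Mtmeet (x i) (y i))
    (fun x y i => Mtjoin (x i) (y i))
    (fun x i => Mneg (x i))
    (fun i => Mtop (c i))
    (fun j i => Mf (c i) j)
    (fun j i => Mt (c i) j)
    (fun i => Mbot (c i)).

(** A ∈ V_n : A is isomorphic to a subalgebra of a product of copies of
    M_0, ..., M_n, i.e. A embeds (injective homomorphism) into such a product. *)
Definition in_Vn (n : nat) (A : Alg n) : Prop :=
  exists (I : Type) (c : I -> 'I_n.+1) (h : acar A -> acar (Mprod c)),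
    is_hom A (Mprod c) h /\ injective h.

Lemma hom_comp (n : nat) (A B C : Alg n) (h : acar A -> acar B)
  (h' : acar B -> acar C) : is_hom A B h -> is_hom B C h' -> is_hom A C (h' \o h).
Proof.
move=> [H1 [H2 [H3 [H4 [H5 [H6 [H7 [H8 H9]]]]]]]]
       [K1 [K2 [K3 [K4 [K5 [K6 [K7 [K8 K9]]]]]]]] /=.
rewrite /comp; do ! split.
- by move=> x y; rewrite H1 K1.
- by move=> x y; rewrite H2 K2.
- by move=> x y; rewrite H3 K3.
- by move=> x y; rewrite H4 K4.
- by move=> x; rewrite H5 K5.
- by rewrite H6 K6.
- by move=> i; rewrite H7 K7.
- by move=> i; rewrite H8 K8.
- by rewrite H9 K9.
Qed.

Lemma gM_hom (n : nat) (k : 'I_n.+1) : is_hom (Malg k) (Malg ord0) (@gM k).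
Proof.
case: k => [[|m] Hm] /=; rewrite /is_hom /=.
- by do ! split.
- do ! split.
  + by case; case.
  + by case; case.
  + by case; case.
  + by case; case.
  + by case.
  + by move=> i; case: ifP.
  + by move=> i; case: ifP.
Qed.

(** * Multi-sorted topological structures (sorts X_0 .. X_n) *)

Record MStruct (n : nat) := MkMS {
  ms_sort : 'I_n.+1 -> Type;
  ms_open : forall k, (ms_sort k -> Prop) -> Prop;
  (** g_k : X_k -> X_0; only used for k in [1,n] *)
  ms_g : forall k, ms_sort k -> ms_sort ord0;
  ms_le : forall k, ms_sort k -> ms_sort k -> Prop;
  (** <=^{jk} ⊆ X_j × X_k; only used for 1 <= j < k <= n *)
  ms_lejk : forall j k, ms_sort j -> ms_sort k -> Prop }.
Arguments ms_sort {n}. Arguments ms_open {n}. Arguments ms_g {n}.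
Arguments ms_le {n}. Arguments ms_lejk {n}.

Definition is_morph (n : nat) (X Y : MStruct n)
  (phi : forall k, ms_sort X k -> ms_sort Y k) : Prop :=
  (forall k, continuous (ms_open X k) (ms_open Y k) (phi k)) /\
  (forall (k : 'I_n.+1) x, (0 < k)%N -> phi ord0 (ms_g X k x) = ms_g Y k (phi k x)) /\
  (forall k x y, ms_le X k x y -> ms_le Y k (phi k x) (phi k y)) /\
  (forall (j k : 'I_n.+1) x y, (0 < j)%N -> (j < k)%N -> ms_lejk X j k x y ->
       ms_lejk Y j k (phi j x) (phi k y)).

Definition ms_iso (n : nat) (X Y : MStruct n) : Prop :=
  exists (phi : forall k, ms_sort X k -> ms_sort Y k)
         (psi : forall k, ms_sort Y k -> ms_sort X k),
    is_morph phi /\ is_morph psi /\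
    (forall k x, psi k (phi k x) = x) /\ (forall k y, phi k (psi k y) = y).

Definition SubPow (n : nat) (S : Type) (Y : forall k : 'I_n.+1, (S -> Mcar k) -> Prop)
  (HY : forall (k : 'I_n.+1) x, Y k x -> Y ord0 (fun s => gM (x s))) : MStruct n :=
  @MkMS n (fun k => {x : S -> Mcar k | Y k x})
    (fun k => sub_open (Y k) (@prod_open S (Mcar k)))
    (fun k z => exist (Y ord0) (fun s => gM (proj1_sig z s)) (HY k _ (proj2_sig z)))
    (fun k x y => forall s, Mle (proj1_sig x s) (proj1_sig y s))
    (fun j k x y => forall s, Mlejk (proj1_sig x s) (proj1_sig y s)).

Definition in_Xn (n : nat) (X : MStruct n) : Prop :=
  exists (S : Type) (Y : forall k : 'I_n.+1, (S -> Mcar k) -> Prop)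
         (HY : forall (k : 'I_n.+1) x, Y k x -> Y ord0 (fun s => gM (x s))),
    inhabited S /\
    (forall k : 'I_n.+1, @prod_open S (Mcar k) (fun x => ~ Y k x)) /\
    ms_iso X (SubPow HY).

Definition D_of (n : nat) (A : Alg n) : MStruct n :=
  @MkMS n (fun k => {x : acar A -> Mcar k | is_hom A (Malg k) x})
    (fun k => sub_open (fun x => is_hom A (Malg k) x) (@prod_open (acar A) (Mcar k)))
    (fun k z => exist (fun x => is_hom A (Malg ord0) x) (@gM k \o proj1_sig z)
                      (hom_comp (proj2_sig z) (gM_hom k)))
    (fun k x y => forall a, Mle (proj1_sig x a) (proj1_sig y a))
    (fun j k x y => forall a, Mlejk (proj1_sig x a) (proj1_sig y a)).

(** * The functor P *)

Definition XU (n : nat) (X : MStruct n) : Type := {k : 'I_n.+1 & ms_sort X k}.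

Definition XU_open (n : nat) (X : MStruct n) (W : XU X -> Prop) : Prop :=
  forall k, ms_open X k (fun x => W (existT _ k x)).

Definition XU_le (n : nat) (X : MStruct n) (x y : XU X) : Prop :=
  match x, y with
  | existT j a, existT k b =>
      (exists e : j = k, ms_le X k (eq_rect j (ms_sort X) a k e) b) \/
      ((0 < j)%N /\ (j < k)%N /\ ms_lejk X j k a b)
  end.

Definition in0 (n : nat) (X : MStruct n) (x : XU X) : Prop := nat_of_ord (projT1 x) = 0.

Definition XU_g (n : nat) (X : MStruct n) (x : XU X) : XU X :=
  if nat_of_ord (projT1 x) == 0 then x
  else existT _ ord0 (ms_g X (projT1 x) (projT2 x)).

(** P(X) = X ∪ X^ ; inl x = x, inr x = x^ *)
Definition P_le (n : nat) (X : MStruct n) (u v : XU X + XU X) : Prop :=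
  match u, v with
  | inl x, inl y =>
      XU_le x y                                             (* (1) *)
      \/ (~ in0 x /\ in0 y /\ XU_le (XU_g x) y)             (* (3) *)
  | inr x, inr y =>
      XU_le y x                                             (* (2) *)
      \/ (in0 x /\ ~ in0 y /\ XU_le (XU_g y) x)             (* (6) *)
  | inl x, inr y =>
      (~ in0 x /\ in0 y /\ XU_le y (XU_g x))                (* (4) *)
      \/ (in0 x /\ ~ in0 y /\ XU_le x (XU_g y))             (* (5) *)
      \/ (~ in0 x /\ ~ in0 y /\
          (XU_le (XU_g x) (XU_g y) \/ XU_le (XU_g y) (XU_g x)))  (* (7) *)
  | inr _, inl _ => False
  end.

Definition P_of (n : nat) (X : MStruct n) : OSpace :=
  @MkOSpace (XU X + XU X)
    (fun V => XU_open (fun x => V (inl x)) /\ XU_open (fun x => V (inr x)))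
    (@P_le n X).

Definition XU_map (n : nat) (X Y : MStruct n)
  (phi : forall k, ms_sort X k -> ms_sort Y k) (x : XU X) : XU Y :=
  existT _ (projT1 x) (phi (projT1 x) (projT2 x)).

Definition P_map (n : nat) (X Y : MStruct n)
  (phi : forall k, ms_sort X k -> ms_sort Y k) (u : os_car (P_of X)) : os_car (P_of Y) :=
  match u with
  | inl x => inl (XU_map phi x)
  | inr x => inr (XU_map phi x)
  end.

(** * H(A^flat) for the reduct A^flat = <A; ∧, ∨, f_0, t_0> *)

Definition is_bl_hom (n : nat) (A : Alg n) (h : acar A -> bool) : Prop :=
  (forall a b, h (a_meet A a b) = h a && h b) /\
  (forall a b, h (a_join A a b) = h a || h b) /\
  h (a_f A ord0) = false /\ h (a_t A ord0) = true.

Definition H_flat (n : nat) (A : Alg n) : OSpace :=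
  @MkOSpace {h : acar A -> bool | is_bl_hom h}
    (sub_open (@is_bl_hom n A) (@prod_open (acar A) bool))
    (fun h h' => forall a, proj1_sig h a ==> proj1_sig h' a).

(* Main.v *)
Require Import Defs.
From mathcomp Require Import all_boot.
From mathcomp Require Import zify.
From mathcomp Require classical_sets.
From Stdlib Require Import Classical FunctionalExtensionality PropExtensionality ProofIrrelevance ClassicalEpsilon.
From Stdlib Require List.
Set Implicit Arguments.
Unset Strict Implicit.
Unset Printing Implicit Defensive.

Definition relZ (z : bool) : M6 -> M6 -> bool := if z then kle6 else lek6.
Definition g6' (m : M6) : M6 := match m with Zero6 => F6 | One6 => T6 | x => x end.

Definition cond (c : nat) (b1 b2 : bool) (j k : nat) : bool :=
 match c with
 | 0 => [&& b1, b2 & j == k]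
 | 1 => [&& b1, b2, 0 < j & j < k]
 | 2 => [&& b1, b2, j != 0 & k == 0]
 | 3 => [&& ~~b1, ~~b2 & j == k]
 | 4 => [&& ~~b1, ~~b2, 0 < k & k < j]
 | 5 => [&& ~~b1, ~~b2, j == 0 & k != 0]
 | 6 => [&& b1, ~~b2, j != 0 & k == 0]
 | 7 => [&& b1, ~~b2, j == 0 & k != 0]
 | 8 => [&& b1, ~~b2, j != 0 & k != 0]
 | 9 => [&& b1, ~~b2, j != 0 & k != 0]
 | _ => false end.

Definition pw (c : nat) (z : bool) (u v : M6) : bool :=
 match c with
 | 0 => relZ z u v | 1 => lek6 u v | 2 => kle6 (g6' u) v
 | 3 => relZ z v u | 4 => lek6 v u | 5 => kle6 (g6' v) u
 | 6 => kle6 v (g6' u) | 7 => kle6 u (g6' v) | 8 => kle6 (g6' u) (g6' v)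
 | _ => kle6 (g6' v) (g6' u) end.

Record pt (S : Type) := Pt { side : bool; srt : nat; v6 : S -> M6 }.

Definition PleC (S : Type) (D : S -> Prop) (u v : pt S) : Prop :=
  exists c, cond c (side u) (side v) (srt u) (srt v) /\
    forall s, D s -> pw c (srt u == 0) (v6 u s) (v6 v s).

Lemma PleC_refl S D (u : pt S) : PleC D u u.
Proof.
case: u => [[] k f]; [exists 0 | exists 3]; rewrite /= eqxx; split=> // s _;
  by case: (k == 0); case: (f s).
Qed.

Lemma PleC_mono S (D D' : S -> Prop) (u v : pt S) :
  (forall s, D' s -> D s) -> PleC D u v -> PleC D' u v.
Proof. move=> H [c [C P]]; exists c; split=> // s /H; exact: P. Qed.

Lemma PleC_ext S D (u v v' : pt S) : side v = side v' -> srt v = srt v' ->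
  (forall s, D s -> v6 v s = v6 v' s) -> PleC D u v -> PleC D u v'.
Proof.
move=> E1 E2 E3 [c [C P]]; exists c; rewrite -E1 -E2; split=> // s Ds.
by rewrite -E3 //; apply: P.
Qed.

Ltac fin := simpl; intros; first [reflexivity | discriminate].

Lemma PleC_trans S D (u v w : pt S) : PleC D u v -> PleC D v w -> PleC D u w.
Proof.
case: u v w => [b1 j x] [b2 k y] [b3 l z] [c1 [C1 P1]] [c2 [C2 P2]]; simpl in *.
do 10?[case: c1 C1 P1 => [|c1] C1 P1]; last by [].
all: do 10?[case: c2 C2 P2 => [|c2] C2 P2]; try by [].
all: simpl in C1, C2.
- exists 0; split; first by move: C1 C2; case: b1; case: b2; case: b3 => //=; lia.
  move=> s Ds /=; move: (P1 s Ds) (P2 s Ds).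
  case Ek: (k == 0); case Ej: (j == 0); (try by exfalso; move: C1 C2 Ej Ek; case: b1; case: b2; case: b3 => /=; lia); case: (x s); case: (y s); case: (z s); fin.
- exists 1; split; first by move: C1 C2; case: b1; case: b2; case: b3 => //=; lia.
  move=> s Ds /=; move: (P1 s Ds) (P2 s Ds).
  case Ek: (k == 0); case Ej: (j == 0); (try by exfalso; move: C1 C2 Ej Ek; case: b1; case: b2; case: b3 => /=; lia); case: (x s); case: (y s); case: (z s); fin.
- exists 2; split; first by move: C1 C2; case: b1; case: b2; case: b3 => //=; lia.
  move=> s Ds /=; move: (P1 s Ds) (P2 s Ds).
  case Ek: (k == 0); case Ej: (j == 0); (try by exfalso; move: C1 C2 Ej Ek; case: b1; case: b2; case: b3 => /=; lia); case: (x s); case: (y s); case: (z s); fin.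
- exfalso; move: C1 C2; case: b1; case: b2; case: b3 => //=; lia.
- exfalso; move: C1 C2; case: b1; case: b2; case: b3 => //=; lia.
- exfalso; move: C1 C2; case: b1; case: b2; case: b3 => //=; lia.
- exists 6; split; first by move: C1 C2; case: b1; case: b2; case: b3 => //=; lia.
  move=> s Ds /=; move: (P1 s Ds) (P2 s Ds).
  case Ek: (k == 0); case Ej: (j == 0); (try by exfalso; move: C1 C2 Ej Ek; case: b1; case: b2; case: b3 => /=; lia); case: (x s); case: (y s); case: (z s); fin.
- exists 7; split; first by move: C1 C2; case: b1; case: b2; case: b3 => //=; lia.
  move=> s Ds /=; move: (P1 s Ds) (P2 s Ds).
  case Ek: (k == 0); case Ej: (j == 0); (try by exfalso; move: C1 C2 Ej Ek; case: b1; case: b2; case: b3 => /=; lia); case: (x s); case: (y s); case: (z s); fin.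
- exists 8; split; first by move: C1 C2; case: b1; case: b2; case: b3 => //=; lia.
  move=> s Ds /=; move: (P1 s Ds) (P2 s Ds).
  case Ek: (k == 0); case Ej: (j == 0); (try by exfalso; move: C1 C2 Ej Ek; case: b1; case: b2; case: b3 => /=; lia); case: (x s); case: (y s); case: (z s); fin.
- exists 9; split; first by move: C1 C2; case: b1; case: b2; case: b3 => //=; lia.
  move=> s Ds /=; move: (P1 s Ds) (P2 s Ds).
  case Ek: (k == 0); case Ej: (j == 0); (try by exfalso; move: C1 C2 Ej Ek; case: b1; case: b2; case: b3 => /=; lia); case: (x s); case: (y s); case: (z s); fin.
- exists 1; split; first by move: C1 C2; case: b1; case: b2; case: b3 => //=; lia.
  move=> s Ds /=; move: (P1 s Ds) (P2 s Ds).
  case Ek: (k == 0); case Ej: (j == 0); (try by exfalso; move: C1 C2 Ej Ek; case: b1; case: b2; case: b3 => /=; lia); case: (x s); case: (y s); case: (z s); fin.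
- exists 1; split; first by move: C1 C2; case: b1; case: b2; case: b3 => //=; lia.
  move=> s Ds /=; move: (P1 s Ds) (P2 s Ds).
  case Ek: (k == 0); case Ej: (j == 0); (try by exfalso; move: C1 C2 Ej Ek; case: b1; case: b2; case: b3 => /=; lia); case: (x s); case: (y s); case: (z s); fin.
- exists 2; split; first by move: C1 C2; case: b1; case: b2; case: b3 => //=; lia.
  move=> s Ds /=; move: (P1 s Ds) (P2 s Ds).
  case Ek: (k == 0); case Ej: (j == 0); (try by exfalso; move: C1 C2 Ej Ek; case: b1; case: b2; case: b3 => /=; lia); case: (x s); case: (y s); case: (z s); fin.
- exfalso; move: C1 C2; case: b1; case: b2; case: b3 => //=; lia.
- exfalso; move: C1 C2; case: b1; case: b2; case: b3 => //=; lia.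
- exfalso; move: C1 C2; case: b1; case: b2; case: b3 => //=; lia.
- exists 6; split; first by move: C1 C2; case: b1; case: b2; case: b3 => //=; lia.
  move=> s Ds /=; move: (P1 s Ds) (P2 s Ds).
  case Ek: (k == 0); case Ej: (j == 0); (try by exfalso; move: C1 C2 Ej Ek; case: b1; case: b2; case: b3 => /=; lia); case: (x s); case: (y s); case: (z s); fin.
- exfalso; move: C1 C2; case: b1; case: b2; case: b3 => //=; lia.
- exists 8; split; first by move: C1 C2; case: b1; case: b2; case: b3 => //=; lia.
  move=> s Ds /=; move: (P1 s Ds) (P2 s Ds).
  case Ek: (k == 0); case Ej: (j == 0); (try by exfalso; move: C1 C2 Ej Ek; case: b1; case: b2; case: b3 => /=; lia); case: (x s); case: (y s); case: (z s); fin.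
- exists 9; split; first by move: C1 C2; case: b1; case: b2; case: b3 => //=; lia.
  move=> s Ds /=; move: (P1 s Ds) (P2 s Ds).
  case Ek: (k == 0); case Ej: (j == 0); (try by exfalso; move: C1 C2 Ej Ek; case: b1; case: b2; case: b3 => /=; lia); case: (x s); case: (y s); case: (z s); fin.
- exists 2; split; first by move: C1 C2; case: b1; case: b2; case: b3 => //=; lia.
  move=> s Ds /=; move: (P1 s Ds) (P2 s Ds).
  case Ek: (k == 0); case Ej: (j == 0); (try by exfalso; move: C1 C2 Ej Ek; case: b1; case: b2; case: b3 => /=; lia); case: (x s); case: (y s); case: (z s); fin.
- exfalso; move: C1 C2; case: b1; case: b2; case: b3 => //=; lia.
- exfalso; move: C1 C2; case: b1; case: b2; case: b3 => //=; lia.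
- exfalso; move: C1 C2; case: b1; case: b2; case: b3 => //=; lia.
- exfalso; move: C1 C2; case: b1; case: b2; case: b3 => //=; lia.
- exfalso; move: C1 C2; case: b1; case: b2; case: b3 => //=; lia.
- exfalso; move: C1 C2; case: b1; case: b2; case: b3 => //=; lia.
- exists 8; split; first by move: C1 C2; case: b1; case: b2; case: b3 => //=; lia.
  move=> s Ds /=; move: (P1 s Ds) (P2 s Ds).
  case Ek: (k == 0); case Ej: (j == 0); (try by exfalso; move: C1 C2 Ej Ek; case: b1; case: b2; case: b3 => /=; lia); case: (x s); case: (y s); case: (z s); fin.
- exfalso; move: C1 C2; case: b1; case: b2; case: b3 => //=; lia.
- exfalso; move: C1 C2; case: b1; case: b2; case: b3 => //=; lia.
- exfalso; move: C1 C2; case: b1; case: b2; case: b3 => //=; lia.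
- exfalso; move: C1 C2; case: b1; case: b2; case: b3 => //=; lia.
- exfalso; move: C1 C2; case: b1; case: b2; case: b3 => //=; lia.
- exists 3; split; first by move: C1 C2; case: b1; case: b2; case: b3 => //=; lia.
  move=> s Ds /=; move: (P1 s Ds) (P2 s Ds).
  case Ek: (k == 0); case Ej: (j == 0); (try by exfalso; move: C1 C2 Ej Ek; case: b1; case: b2; case: b3 => /=; lia); case: (x s); case: (y s); case: (z s); fin.
- exists 4; split; first by move: C1 C2; case: b1; case: b2; case: b3 => //=; lia.
  move=> s Ds /=; move: (P1 s Ds) (P2 s Ds).
  case Ek: (k == 0); case Ej: (j == 0); (try by exfalso; move: C1 C2 Ej Ek; case: b1; case: b2; case: b3 => /=; lia); case: (x s); case: (y s); case: (z s); fin.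
- exists 5; split; first by move: C1 C2; case: b1; case: b2; case: b3 => //=; lia.
  move=> s Ds /=; move: (P1 s Ds) (P2 s Ds).
  case Ek: (k == 0); case Ej: (j == 0); (try by exfalso; move: C1 C2 Ej Ek; case: b1; case: b2; case: b3 => /=; lia); case: (x s); case: (y s); case: (z s); fin.
- exfalso; move: C1 C2; case: b1; case: b2; case: b3 => //=; lia.
- exfalso; move: C1 C2; case: b1; case: b2; case: b3 => //=; lia.
- exfalso; move: C1 C2; case: b1; case: b2; case: b3 => //=; lia.
- exfalso; move: C1 C2; case: b1; case: b2; case: b3 => //=; lia.
- exfalso; move: C1 C2; case: b1; case: b2; case: b3 => //=; lia.
- exfalso; move: C1 C2; case: b1; case: b2; case: b3 => //=; lia.
- exfalso; move: C1 C2; case: b1; case: b2; case: b3 => //=; lia.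
- exists 4; split; first by move: C1 C2; case: b1; case: b2; case: b3 => //=; lia.
  move=> s Ds /=; move: (P1 s Ds) (P2 s Ds).
  case Ek: (k == 0); case Ej: (j == 0); (try by exfalso; move: C1 C2 Ej Ek; case: b1; case: b2; case: b3 => /=; lia); case: (x s); case: (y s); case: (z s); fin.
- exists 4; split; first by move: C1 C2; case: b1; case: b2; case: b3 => //=; lia.
  move=> s Ds /=; move: (P1 s Ds) (P2 s Ds).
  case Ek: (k == 0); case Ej: (j == 0); (try by exfalso; move: C1 C2 Ej Ek; case: b1; case: b2; case: b3 => /=; lia); case: (x s); case: (y s); case: (z s); fin.
- exfalso; move: C1 C2; case: b1; case: b2; case: b3 => //=; lia.
- exfalso; move: C1 C2; case: b1; case: b2; case: b3 => //=; lia.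
- exfalso; move: C1 C2; case: b1; case: b2; case: b3 => //=; lia.
- exfalso; move: C1 C2; case: b1; case: b2; case: b3 => //=; lia.
- exfalso; move: C1 C2; case: b1; case: b2; case: b3 => //=; lia.
- exfalso; move: C1 C2; case: b1; case: b2; case: b3 => //=; lia.
- exfalso; move: C1 C2; case: b1; case: b2; case: b3 => //=; lia.
- exfalso; move: C1 C2; case: b1; case: b2; case: b3 => //=; lia.
- exists 5; split; first by move: C1 C2; case: b1; case: b2; case: b3 => //=; lia.
  move=> s Ds /=; move: (P1 s Ds) (P2 s Ds).
  case Ek: (k == 0); case Ej: (j == 0); (try by exfalso; move: C1 C2 Ej Ek; case: b1; case: b2; case: b3 => /=; lia); case: (x s); case: (y s); case: (z s); fin.
- exists 5; split; first by move: C1 C2; case: b1; case: b2; case: b3 => //=; lia.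
  move=> s Ds /=; move: (P1 s Ds) (P2 s Ds).
  case Ek: (k == 0); case Ej: (j == 0); (try by exfalso; move: C1 C2 Ej Ek; case: b1; case: b2; case: b3 => /=; lia); case: (x s); case: (y s); case: (z s); fin.
- exfalso; move: C1 C2; case: b1; case: b2; case: b3 => //=; lia.
- exfalso; move: C1 C2; case: b1; case: b2; case: b3 => //=; lia.
- exfalso; move: C1 C2; case: b1; case: b2; case: b3 => //=; lia.
- exfalso; move: C1 C2; case: b1; case: b2; case: b3 => //=; lia.
- exfalso; move: C1 C2; case: b1; case: b2; case: b3 => //=; lia.
- exfalso; move: C1 C2; case: b1; case: b2; case: b3 => //=; lia.
- exfalso; move: C1 C2; case: b1; case: b2; case: b3 => //=; lia.
- exfalso; move: C1 C2; case: b1; case: b2; case: b3 => //=; lia.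
- exists 6; split; first by move: C1 C2; case: b1; case: b2; case: b3 => //=; lia.
  move=> s Ds /=; move: (P1 s Ds) (P2 s Ds).
  case Ek: (k == 0); case Ej: (j == 0); (try by exfalso; move: C1 C2 Ej Ek; case: b1; case: b2; case: b3 => /=; lia); case: (x s); case: (y s); case: (z s); fin.
- exfalso; move: C1 C2; case: b1; case: b2; case: b3 => //=; lia.
- exists 9; split; first by move: C1 C2; case: b1; case: b2; case: b3 => //=; lia.
  move=> s Ds /=; move: (P1 s Ds) (P2 s Ds).
  case Ek: (k == 0); case Ej: (j == 0); (try by exfalso; move: C1 C2 Ej Ek; case: b1; case: b2; case: b3 => /=; lia); case: (x s); case: (y s); case: (z s); fin.
- exfalso; move: C1 C2; case: b1; case: b2; case: b3 => //=; lia.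
- exfalso; move: C1 C2; case: b1; case: b2; case: b3 => //=; lia.
- exfalso; move: C1 C2; case: b1; case: b2; case: b3 => //=; lia.
- exfalso; move: C1 C2; case: b1; case: b2; case: b3 => //=; lia.
- exfalso; move: C1 C2; case: b1; case: b2; case: b3 => //=; lia.
- exfalso; move: C1 C2; case: b1; case: b2; case: b3 => //=; lia.
- exfalso; move: C1 C2; case: b1; case: b2; case: b3 => //=; lia.
- exists 7; split; first by move: C1 C2; case: b1; case: b2; case: b3 => //=; lia.
  move=> s Ds /=; move: (P1 s Ds) (P2 s Ds).
  case Ek: (k == 0); case Ej: (j == 0); (try by exfalso; move: C1 C2 Ej Ek; case: b1; case: b2; case: b3 => /=; lia); case: (x s); case: (y s); case: (z s); fin.
- exists 7; split; first by move: C1 C2; case: b1; case: b2; case: b3 => //=; lia.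
  move=> s Ds /=; move: (P1 s Ds) (P2 s Ds).
  case Ek: (k == 0); case Ej: (j == 0); (try by exfalso; move: C1 C2 Ej Ek; case: b1; case: b2; case: b3 => /=; lia); case: (x s); case: (y s); case: (z s); fin.
- exfalso; move: C1 C2; case: b1; case: b2; case: b3 => //=; lia.
- exfalso; move: C1 C2; case: b1; case: b2; case: b3 => //=; lia.
- exfalso; move: C1 C2; case: b1; case: b2; case: b3 => //=; lia.
- exfalso; move: C1 C2; case: b1; case: b2; case: b3 => //=; lia.
- exfalso; move: C1 C2; case: b1; case: b2; case: b3 => //=; lia.
- exfalso; move: C1 C2; case: b1; case: b2; case: b3 => //=; lia.
- exfalso; move: C1 C2; case: b1; case: b2; case: b3 => //=; lia.
- exfalso; move: C1 C2; case: b1; case: b2; case: b3 => //=; lia.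
- exists 8; split; first by move: C1 C2; case: b1; case: b2; case: b3 => //=; lia.
  move=> s Ds /=; move: (P1 s Ds) (P2 s Ds).
  case Ek: (k == 0); case Ej: (j == 0); (try by exfalso; move: C1 C2 Ej Ek; case: b1; case: b2; case: b3 => /=; lia); case: (x s); case: (y s); case: (z s); fin.
- exists 8; split; first by move: C1 C2; case: b1; case: b2; case: b3 => //=; lia.
  move=> s Ds /=; move: (P1 s Ds) (P2 s Ds).
  case Ek: (k == 0); case Ej: (j == 0); (try by exfalso; move: C1 C2 Ej Ek; case: b1; case: b2; case: b3 => /=; lia); case: (x s); case: (y s); case: (z s); fin.
- exfalso; move: C1 C2; case: b1; case: b2; case: b3 => //=; lia.
- exfalso; move: C1 C2; case: b1; case: b2; case: b3 => //=; lia.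
- exfalso; move: C1 C2; case: b1; case: b2; case: b3 => //=; lia.
- exfalso; move: C1 C2; case: b1; case: b2; case: b3 => //=; lia.
- exfalso; move: C1 C2; case: b1; case: b2; case: b3 => //=; lia.
- exfalso; move: C1 C2; case: b1; case: b2; case: b3 => //=; lia.
- exfalso; move: C1 C2; case: b1; case: b2; case: b3 => //=; lia.
- exfalso; move: C1 C2; case: b1; case: b2; case: b3 => //=; lia.
- exists 9; split; first by move: C1 C2; case: b1; case: b2; case: b3 => //=; lia.
  move=> s Ds /=; move: (P1 s Ds) (P2 s Ds).
  case Ek: (k == 0); case Ej: (j == 0); (try by exfalso; move: C1 C2 Ej Ek; case: b1; case: b2; case: b3 => /=; lia); case: (x s); case: (y s); case: (z s); fin.
- exists 9; split; first by move: C1 C2; case: b1; case: b2; case: b3 => //=; lia.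
  move=> s Ds /=; move: (P1 s Ds) (P2 s Ds).
  case Ek: (k == 0); case Ej: (j == 0); (try by exfalso; move: C1 C2 Ej Ek; case: b1; case: b2; case: b3 => /=; lia); case: (x s); case: (y s); case: (z s); fin.
- exfalso; move: C1 C2; case: b1; case: b2; case: b3 => //=; lia.
- exfalso; move: C1 C2; case: b1; case: b2; case: b3 => //=; lia.
- exfalso; move: C1 C2; case: b1; case: b2; case: b3 => //=; lia.
- exfalso; move: C1 C2; case: b1; case: b2; case: b3 => //=; lia.
- exfalso; move: C1 C2; case: b1; case: b2; case: b3 => //=; lia.
Qed.

Lemma PleC_antisym S D (u v : pt S) : PleC D u v -> PleC D v u ->
  side u = side v /\ srt u = srt v /\ forall s, D s -> v6 u s = v6 v s.
Proof.
case: u v => [b1 j x] [b2 k y] [c1 [C1 P1]] [c2 [C2 P2]]; simpl in *.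
do 10?[case: c1 C1 P1 => [|c1] C1 P1]; last by [].
all: do 10?[case: c2 C2 P2 => [|c2] C2 P2]; try by [].
all: simpl in C1, C2.
all: try (by exfalso; move: C1 C2; case: b1; case: b2 => //=; lia).
all: have Ejk : j = k by move: C1 C2; case: b1; case: b2 => //=; lia.
all: subst k; (split; [by move: C1 C2; case: b1; case: b2 | split => // s Ds]).
all: move: (P1 s Ds) (P2 s Ds); case: (j == 0); case: (x s); case: (y s); fin.
Qed.

Lemma PleC_witness S (u v : pt S) : ~ PleC (fun _ => True) u v ->
  exists l : list S, ~ PleC (fun s => List.In s l) u v.
Proof.
move=> Hn.
have key : forall cs : seq nat, exists l : list S, forall c, c \in cs ->
    cond c (side u) (side v) (srt u) (srt v) ->
    exists2 s, List.In s l & ~~ pw c (srt u == 0) (v6 u s) (v6 v s).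
  elim=> [|c cs [l Hl]]; first by exists nil.
  case: (classic (cond c (side u) (side v) (srt u) (srt v))) => Hc; last first.
    exists l => c'; rewrite inE => /orP[/eqP -> //|]; exact: Hl.
  have [s Hs] : exists s, ~~ pw c (srt u == 0) (v6 u s) (v6 v s).
    apply: NNPP => Hne; apply: Hn; exists c; split=> // s _.
    by apply: NNPP => H; apply: Hne; exists s; apply/negP.
  exists (s :: l) => c'; rewrite inE => /orP[/eqP -> _|/Hl H /H [s' Hs' Hp]].
    by exists s => //; left.
  by exists s' => //; right.
have [l Hl] := key (iota 0 10); exists l => [[c [C P]]].
have cin : c \in iota 0 10.
  by rewrite mem_iota /=; clear P; case: c C => [|[|[|[|[|[|[|[|[|[|c]]]]]]]]]].
have [s Hs Hp] := Hl c cin C.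
by move/negP: Hp; apply; apply: P.
Qed.

Definition emb4 (m : M4) : M6 :=
  match m with Top4 => Top6 | Bot4 => Bot6 | F4 => F6 | T4 => T6 end.
Definition emb (m : nat) : Mcar m -> M6 :=
  match m as m0 return Mcar m0 -> M6 with 0 => emb4 | S _ => fun x => x end.

Lemma emb_inj m (u v : Mcar m) : emb u = emb v -> u = v.
Proof. by case: m u v => [|m] /=; [case; case|]. Qed.

Lemma Mle_emb m (u v : Mcar m) : Mle u v = relZ (m == 0) (emb u) (emb v).
Proof. by case: m u v => [|m] /=; case; case. Qed.

Lemma Mlejk_emb j k (u : Mcar j) (v : Mcar k) : (0 < j)%N -> (0 < k)%N ->
  Mlejk u v = lek6 (emb u) (emb v).
Proof. by case: j u => [|j] // u; case: k v => [|k] // v. Qed.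

Lemma emb_gM m (u : Mcar m) : emb (@gM m u) = g6' (emb u).
Proof. by case: m u => [|m] /=; case. Qed.

Section SubPowSec.
Local Unset Implicit Arguments.
Variables (n : nat) (S : Type) (Y : forall k : 'I_n.+1, (S -> Mcar k) -> Prop).
Variable (HY : forall (k : 'I_n.+1) x, Y k x -> Y ord0 (fun s => gM (x s))).
Local Set Implicit Arguments.
Local Notation X := (SubPow HY).

Definition kx (x : XU X) : nat := nat_of_ord (projT1 x).
Definition fx (x : XU X) (s : S) : M6 := emb (proj1_sig (projT2 x) s).

Definition toP (u : XU X + XU X) : pt S :=
  match u with inl x => Pt true (kx x) (fx x) | inr x => Pt false (kx x) (fx x) end.

Lemma XU_le_iff (x y : XU X) : XU_le x y <->
  (kx x = kx y /\ forall s, relZ (kx x == 0) (fx x s) (fx y s)) \/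
  (0 < kx x /\ kx x < kx y /\ forall s, lek6 (fx x s) (fx y s))%N.
Proof.
case: x => j [a Ha]; case: y => k [b Hb]; rewrite /XU_le /kx /fx /=; split.
- case=> [[e H]|[H0 [H1 H]]].
  + left; destruct e; split => // s; rewrite -Mle_emb; exact: H.
  + right; split => //; split => //; move=> s; rewrite -Mlejk_emb //; (try lia); exact: H.
- case=> [[e H]|[H0 [H1 H]]].
  + left; have E : j = k by apply: val_inj.
    subst k; exists erefl => s /=; rewrite Mle_emb; exact: H.
  + right; split => //; split => //; move=> s; rewrite Mlejk_emb //; (try lia); exact: H.
Qed.

Lemma XU_g_nz (x : XU X) : kx x <> 0 ->
  kx (XU_g x) = 0 /\ forall s, fx (XU_g x) s = g6' (fx x s).
Proof.
rewrite /XU_g /kx /fx; case: eqP => // _ _; split => // s /=; exact: emb_gM.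
Qed.

Lemma P_le_C (u v : XU X + XU X) : P_le u v <-> PleC (fun _ => True) (toP u) (toP v).
Proof.
case: u => x; case: v => y; rewrite /P_le /PleC /in0 /=;
  rewrite -/(kx x) -/(kx y).
-
  split.
  + case=> [/XU_le_iff [[E H]|[H0 [H1 H]]]|[Hx [Hy /XU_le_iff H]]].
    * exists 0; rewrite /= E eqxx; split=> // s _; rewrite -E; exact: H.
    * exists 1; rewrite /= H0 H1; split=> // s _; exact: H.
    * have [Eg Hg] := XU_g_nz Hx.
      exists 2; rewrite /= Hy eqxx; split; first by rewrite ?andbT; apply/eqP.
      move=> s _; rewrite -Hg; case: H => [[_ H]|[H0 _]]; last by move: H0; rewrite Eg.
      by move: (H s); rewrite Eg.
  + case=> [[|[|[|[|[|[|[|[|[|[|c]]]]]]]]]] [C P]] //=; move: C => /=.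
    * move=> /eqP E; left; apply/XU_le_iff; left; split => // s; exact: P.
    * move=> /andP[H0 H1]; left; apply/XU_le_iff; right; split => //; split => // s; exact: P.
    * move=> /andP[/eqP Hx /eqP Hy]; right; have [Eg Hg] := XU_g_nz Hx.
      split => //; split => //; apply/XU_le_iff; left; rewrite Eg Hy; split => // s.
      by rewrite Hg; apply: P.
-
  split.
  + case=> [[Hx [Hy H]]|[[Hx [Hy H]]|[Hx [Hy H]]]].
    * have [Eg Hg] := XU_g_nz Hx; move/XU_le_iff: H => [[_ H]|[H0 _]]; last by lia.
      exists 6; rewrite /= Hy eqxx; split; first by rewrite ?andbT; apply/eqP.
      move=> s _; rewrite -Hg; move: (H s); by rewrite Hy.
    * have [Eg Hg] := XU_g_nz Hy; move/XU_le_iff: H => [[_ H]|[H0 _]]; last by lia.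
      exists 7; rewrite /= Hx eqxx; split; first by rewrite ?andbT; apply/eqP.
      move=> s _; rewrite -Hg; move: (H s); by rewrite Hx.
    * have [Egx Hgx] := XU_g_nz Hx; have [Egy Hgy] := XU_g_nz Hy.
      case: H => /XU_le_iff [[_ H]|[H0 _]]; try lia.
      - exists 8; split; first by rewrite /=; apply/andP; split; apply/eqP.
        move=> s _ /=; rewrite -Hgx -Hgy; move: (H s); by rewrite Egx.
      - exists 9; split; first by rewrite /=; apply/andP; split; apply/eqP.
        move=> s _ /=; rewrite -Hgx -Hgy; move: (H s); by rewrite Egy.
  + case=> [[|[|[|[|[|[|[|[|[|[|c]]]]]]]]]] [C P]] //=; move: C => /=.
    * move=> /andP[/eqP Hx /eqP Hy]; left; have [Eg Hg] := XU_g_nz Hx.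
      split => //; split => //; apply/XU_le_iff; left; rewrite Eg Hy; split => // s.
      by rewrite Hg; apply: P.
    * move=> /andP[/eqP Hx /eqP Hy]; right; left; have [Eg Hg] := XU_g_nz Hy.
      split => //; split => //; apply/XU_le_iff; left; rewrite Eg Hx; split => // s.
      by rewrite Hg; apply: P.
    * move=> /andP[/eqP Hx /eqP Hy]; right; right; have [Egx Hgx] := XU_g_nz Hx.
      have [Egy Hgy] := XU_g_nz Hy.
      split => //; split => //; left; apply/XU_le_iff; left; rewrite Egx Egy; split => // s.
      by rewrite Hgx Hgy; apply: P.
    * move=> /andP[/eqP Hx /eqP Hy]; right; right; have [Egx Hgx] := XU_g_nz Hx.
      have [Egy Hgy] := XU_g_nz Hy.
      split => //; split => //; right; apply/XU_le_iff; left; rewrite Egx Egy; split => // s.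
      by rewrite Hgx Hgy; apply: P.
-
  by split => [[]|[[|[|[|[|[|[|[|[|[|[|c]]]]]]]]]] [C P]]].
-
  split.
  + case=> [/XU_le_iff [[E H]|[H0 [H1 H]]]|[Hx [Hy /XU_le_iff H]]].
    * exists 3; rewrite /= E eqxx; split=> // s _; by move: (H s); rewrite E.
    * exists 4; rewrite /= H0 H1; split=> // s _; exact: H.
    * have [Eg Hg] := XU_g_nz Hy.
      exists 5; rewrite /= Hx eqxx; split; first by rewrite ?andbT; apply/eqP.
      move=> s _; rewrite -Hg; case: H => [[_ H]|[H0 _]]; last by move: H0; rewrite Eg.
      by move: (H s); rewrite Eg.
  + case=> [[|[|[|[|[|[|[|[|[|[|c]]]]]]]]]] [C P]] //=; move: C => /=.
    * move=> /eqP E; left; apply/XU_le_iff; left; rewrite -E; split => // s; exact: P.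
    * move=> /andP[H0 H1]; left; apply/XU_le_iff; right; split => //; split => // s; exact: P.
    * move=> /andP[/eqP Hx /eqP Hy]; right; have [Eg Hg] := XU_g_nz Hy.
      split => //; split => //; apply/XU_le_iff; left; rewrite Eg Hx; split => // s.
      by rewrite Hg; apply: P.
Qed.

End SubPowSec.
Section PowCompact.
Variables (S M : Type) (eM : list M) (HeM : forall m, List.In m eM).
Variables (I : Type) (G : I -> (S -> M) -> Prop).
Hypothesis Gopen : forall i, prod_open (G i).
Hypothesis Gcov : forall x, exists i, G i x.

Definition cyl (p : (S * M) -> Prop) (l : list S) (x : S -> M) : Prop :=
  forall s m, List.In s l -> p (s, m) -> x s = m.
Definition FC (C : (S -> M) -> Prop) : Prop :=
  exists li : list I, forall x, C x -> exists i, List.In i li /\ G i x.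
Definition Good (p : (S * M) -> Prop) : Prop := forall l, ~ FC (cyl p l).

Lemma FC_sub (C C' : (S -> M) -> Prop) : (forall x, C x -> C' x) -> FC C' -> FC C.
Proof. move=> H [li Hli]; exists li => x /H; exact: Hli. Qed.

Lemma cyl_mono p l l' x : (forall s, List.In s l -> List.In s l') -> cyl p l' x -> cyl p l x.
Proof. move=> Hl H s m /Hl; exact: H. Qed.

Lemma good_functional p : Good p -> forall s m m', p (s, m) -> p (s, m') -> m = m'.
Proof.
move=> Hg s m m' H1 H2; apply: NNPP => Hne; apply: (Hg (s :: nil)).
exists nil => x Hx; exfalso; apply: Hne.
by rewrite -(Hx s m _ H1) ?(Hx s m' _ H2) //=; left.
Qed.

Lemma chain_good (F : (S * M -> Prop) -> Prop) :
  Good (fun _ => False) -> (forall p, F p -> Good p) ->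
  (forall p q, F p -> F q -> (forall t, p t -> q t) \/ (forall t, q t -> p t)) ->
  Good (fun t => exists2 p, F p & p t).
Proof.
move=> H0 HF Htot.
have key : forall l, exists pm : S * M -> Prop, (pm = (fun _ => False) \/ F pm) /\
   forall s m, List.In s l -> (exists2 p, F p & p (s, m)) -> pm (s, m).
  elim=> [|s l [pm [Hpm Hin]]].
    by exists (fun _ => False); split; [left|].
  case: (classic (exists m, exists2 p, F p & p (s, m))) => [[m [p Fp ps]]|Hno].
  - case: Hpm => [Epm|Fpm].
    + exists p; split; first by right.
      move=> s' m' [<-|Hl] [q Fq qs].
      * case: (Htot p q Fp Fq) => Hpq.
        - have := good_functional (HF q Fq) (Hpq _ ps) qs. by move=> <-.
        - exact: Hpq.
      * by have := Hin s' m' Hl (ex_intro2 _ _ q Fq qs); rewrite Epm.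
    + case: (Htot p pm Fp Fpm) => Hpq.
      * exists pm; split; first by right.
        move=> s' m' [<-|Hl] [q Fq qs]; last by apply: Hin => //; exists q.
        case: (Htot q pm Fq Fpm) => Hq; first exact: Hq.
        have := good_functional (HF q Fq) (Hq _ (Hpq _ ps)) qs. by move=> <-; apply: Hpq.
      * exists p; split; first by right.
        move=> s' m' [<-|Hl] [q Fq qs]; last by apply: Hpq; apply: Hin => //; exists q.
        case: (Htot q p Fq Fp) => Hq; first exact: Hq.
        have := good_functional (HF q Fq) (Hq _ ps) qs. by move=> <-.
  - exists pm; split=> // s' m' [<-|Hl] Hex; last exact: Hin.
    by exfalso; apply: Hno; exists m'.
move=> l; have [pm [Hpm Hin]] := key l.
have sub : forall x, cyl pm l x -> cyl (fun t => exists2 p, F p & p t) l x.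
  move=> x Hx s m Hs Hp; apply: Hx => //; exact: Hin.
case: Hpm => [Epm|Fpm]; last first.
  by move=> Hfc; apply: (HF pm Fpm l); exact: FC_sub sub Hfc.
move=> Hfc; apply: (H0 l); apply: (FC_sub _ Hfc) => x Hx s m Hs [p Fp ps].
by have := Hin s m Hs (ex_intro2 _ _ p Fp ps); rewrite Epm.
Qed.

Lemma pow_compact_aux : FC (fun _ => True).
Proof.
apply: NNPP => Hnfc.
have Hempty : Good (fun _ => False).
  move=> l Hfc; apply: Hnfc; apply: FC_sub Hfc => x _ s m _ [].
have [p [Gp Pmax]] := @classical_sets.Zorn_bigcup (S * M) Good
  (fun F FP Ftot => chain_good Hempty (fun p Fp => FP p Fp) (fun p q Fp Fq => Ftot p q Fp Fq)).
have total : forall s, exists m, p (s, m).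
  move=> s0; apply: NNPP => Hno.
  have bad : forall m, exists l, FC (cyl (fun t => p t \/ t = (s0, m)) l).
    move=> m; apply: NNPP => Hn; apply: (Pmax (fun t => p t \/ t = (s0, m))).
      split; first by move=> t Ht; left.
      move=> Hsub; apply: Hno; exists m; apply: Hsub; by right.
    move=> l Hfc; apply: Hn; by exists l.
  have comb : forall ms : list M, exists L, FC (fun x => List.In (x s0) ms /\ cyl p L x).
    elim=> [|m ms [L [li Hli]]].
      by exists nil; exists nil => x [[]].
    have [lm [lim Hlim]] := bad m.
    exists (lm ++ L); exists (lim ++ li) => x [[Hm|Hm] Hc].
    - have Hc' : cyl (fun t => p t \/ t = (s0, m)) lm x.
        move=> s m' Hs [Hp|[-> ->]]; last by rewrite Hm.
        by apply: Hc => //; apply: List.in_or_app; left.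
      have [i [Hi Gi]] := Hlim x Hc'.
      by exists i; split => //; apply: List.in_or_app; left.
    - have [i [Hi Gi]] := Hli x (conj Hm (fun s m' Hs Hp => Hc s m' (List.in_or_app _ _ _ (or_intror Hs)) Hp)).
      by exists i; split => //; apply: List.in_or_app; right.
  have [L HL] := comb eM.
  by apply: (Gp L); apply: FC_sub HL => x Hx; split.
pose x := fun s => proj1_sig (constructive_indefinite_description _ (total s)).
have Hx : forall s, p (s, x s).
  by move=> s; rewrite /x; case: constructive_indefinite_description.
have [i Gi] := Gcov x.
have [l Hl] := Gopen Gi.
apply: (Gp l); exists (i :: nil) => y Hy; exists i; split; first by left.
apply: Hl => s Hs; apply: Hy => //.
Qed.

End PowCompact.

Lemma pow_compact (S M : Type) (eM : list M) (HeM : forall m, List.In m eM)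
  (I : Type) (G : I -> (S -> M) -> Prop) :
  (forall i, prod_open (G i)) -> (forall x, exists i, G i x) ->
  exists li : list I, forall x, exists i, List.In i li /\ G i x.
Proof.
move=> Go Gc; have [li Hli] := pow_compact_aux HeM Go Gc.
by exists li => x; apply: Hli.
Qed.

Lemma sub_open_ext T (P : T -> Prop) opn (V V' : {x | P x} -> Prop) :
  sub_open P opn V -> (forall z, V z <-> V' z) -> sub_open P opn V'.
Proof. move=> [U [HU HV]] E; exists U; split=> // z; rewrite -E; exact: HV. Qed.

Lemma sub_prod_union S M (P : (S -> M) -> Prop) I (G : I -> {x | P x} -> Prop) :
  (forall i, sub_open P (@prod_open S M) (G i)) ->
  sub_open P (@prod_open S M) (fun z => exists i, G i z).
Proof.
move=> HG.
exists (fun x => exists i U, prod_open U /\ (forall z, G i z <-> U (proj1_sig z)) /\ U x).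
split.
- move=> x [i [U [HU [HGU Ux]]]]; have [l Hl] := HU x Ux.
  by exists l => y Hy; exists i, U; split => //; split => //; apply: Hl.
- move=> z; split.
  + move=> [i Gi]; have [U [HU HGU]] := HG i; exists i, U; do 2 split => //.
    by rewrite -HGU.
  + by move=> [i [U [HU [HGU Ux]]]]; exists i; rewrite HGU.
Qed.

Lemma sub_prod_and S M (P : (S -> M) -> Prop) (V W : {x | P x} -> Prop) :
  sub_open P (@prod_open S M) V -> sub_open P (@prod_open S M) W ->
  sub_open P (@prod_open S M) (fun z => V z /\ W z).
Proof.
move=> [U [HU EU]] [U' [HU' EU']]; exists (fun x => U x /\ U' x); split.
- move=> x [Ux U'x]; have [l Hl] := HU x Ux; have [l' Hl'] := HU' x U'x.
  exists (l ++ l') => y Hy; split.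
  + by apply: Hl => s Hs; apply: Hy; apply: List.in_or_app; left.
  + by apply: Hl' => s Hs; apply: Hy; apply: List.in_or_app; right.
- by move=> z; rewrite EU EU'.
Qed.

Lemma sub_prod_True S M (P : (S -> M) -> Prop) :
  sub_open P (@prod_open S M) (fun _ => True).
Proof. by exists (fun _ => True); split => // x _; exists nil. Qed.

Definition enumM (m : nat) : list (Mcar m) :=
  match m as m0 return list (Mcar m0) with
  | 0 => (Top4 :: Bot4 :: F4 :: T4 :: nil)%list
  | S _ => (Top6 :: Bot6 :: F6 :: T6 :: Zero6 :: One6 :: nil)%list end.
Lemma enumM_all m (x : Mcar m) : List.In x (enumM m).
Proof. case: m x => [|m] /=; case; tauto. Qed.

Lemma sub_compact S M (eM : list M) (HeM : forall m, List.In m eM)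
  (P : (S -> M) -> Prop) (HPc : prod_open (fun x => ~ P x))
  I (G : I -> {x | P x} -> Prop) :
  (forall i, sub_open P (@prod_open S M) (G i)) -> (forall z, exists i, G i z) ->
  exists li : list I, forall z, exists i, List.In i li /\ G i z.
Proof.
move=> HG Hcov.
pose J := {p : I * ((S -> M) -> Prop) | prod_open p.2 /\ forall z, G p.1 z <-> p.2 (proj1_sig z)}.
pose G' (j : option J) : (S -> M) -> Prop :=
  match j with None => fun x => ~ P x | Some q => (proj1_sig q).2 end.
have HG'o : forall j, prod_open (G' j).
  case=> [q|] /=; [exact: (proj1 (proj2_sig q)) | exact: HPc].
have HG'c : forall x, exists j, G' j x.
  move=> x; case: (classic (P x)) => Px; last by exists None.
  have [i Gi] := Hcov (exist _ x Px).
  have [U [HU EU]] := HG i.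
  exists (Some (exist _ (i, U) (conj HU EU))) => /=; by rewrite -(EU (exist _ x Px)).
have [lj Hlj] := @pow_compact S M eM HeM (option J) G' HG'o HG'c.
exists (pmap (fun j : option J => match j with None => None | Some q => Some (proj1_sig q).1 end) lj).
move=> z; have [[q|] [Hin Gq]] := Hlj (proj1_sig z); last by case: Gq; exact: proj2_sig z.
exists (proj1_sig q).1; split; last by rewrite (proj2 (proj2_sig q)).
elim: lj Hin {Hlj} => [//|j lj IH] /= [->|H] /=; first by left.
by case: j => [j|] /=; [right; apply: IH | apply: IH].
Qed.

Lemma list_choice (J : eqType) (I : Type) (js : seq J) (R : J -> list I -> Prop) :
  (forall j l l', (forall i, List.In i l -> List.In i l') -> R j l -> R j l') ->
  (forall j, exists l, R j l) -> exists L, forall j, j \in js -> R j L.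
Proof.
move=> Rmono Rex; elim: js => [|j js [L HL]]; first by exists nil.
have [l Hl] := Rex j; exists (l ++ L) => j'; rewrite inE => /orP[/eqP ->|Hj'].
- by apply: Rmono Hl => i Hi; apply: List.in_or_app; left.
- by apply: (Rmono _ L) => [i Hi|]; [apply: List.in_or_app; right|apply: HL].
Qed.

Definition icompact (X : OSpace) (K : os_car X -> Prop) : Prop :=
  forall I (G : I -> os_car X -> Prop), (forall i, os_open X (G i)) ->
    (forall u, K u -> exists i, G i u) ->
    exists li : list I, forall u, K u -> exists i, List.In i li /\ G i u.
Arguments icompact : clear implicits.

Lemma icompact_os (X : OSpace) : icompact X (fun _ => True) -> os_compact X.
Proof.
move=> HX F HF Hcov.
have [li Hli] := HX {U | F U} (fun i => proj1_sig i) (fun i => HF _ (proj2_sig i))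
  (fun u _ => let: ex_intro U (conj FU Uu) := Hcov u in ex_intro _ (exist _ U FU) Uu).
exists (List.map (fun i => proj1_sig i) li); split.
- move=> U /List.in_map_iff [i [<- _]]; exact: proj2_sig i.
- move=> x; have [i [Hi Gi]] := Hli x I; exists (proj1_sig i); split => //.
  by apply: List.in_map.
Qed.

Lemma icompact_closed (X : OSpace) (K : os_car X -> Prop) :
  icompact X (fun _ => True) -> os_open X (fun u => ~ K u) -> icompact X K.
Proof.
move=> HX HK I G HG Hcov.
have Hc : forall u, K u \/ ~ K u -> exists o : option I,
    (match o with None => fun u => ~ K u | Some i => G i end) u.
  move=> u; case=> Ku; last by exists None.
  by have [i Gi] := Hcov u Ku; exists (Some i).
have [li Hli] := HX (option I) (fun o => match o with None => fun u => ~ K u | Some i => G i end)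
  (fun o => match o with None => HK | Some i => HG i end) (fun u _ => Hc u (classic (K u))).
exists (pmap id li) => u Ku; have [[i|] [Hi Gi]] := Hli u Logic.I; last by [].
exists i; split => //.
elim: li Hi {Hli} => [//|o li IH] /= [->|H] /=; first by left.
by case: o => [o|] /=; [right; apply: IH | apply: IH].
Qed.

Section SubPowPriestley.
Local Unset Implicit Arguments.
Variables (n : nat) (S : Type) (Y : forall k : 'I_n.+1, (S -> Mcar k) -> Prop).
Variable (HY : forall (k : 'I_n.+1) x, Y k x -> Y ord0 (fun s => gM (x s))).
Local Set Implicit Arguments.
Local Notation X := (SubPow HY).

Lemma toP_inj (u v : XU X + XU X) : side (toP u) = side (toP v) ->
  srt (toP u) = srt (toP v) -> (forall s, v6 (toP u) s = v6 (toP v) s) -> u = v.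
Proof.
have key : forall (x y : XU X), kx x = kx y -> (forall s, fx x s = fx y s) -> x = y.
  case=> j [a Ha] [k [b Hb]]; rewrite /kx /fx /= => E H.
  have E' : j = k by apply: val_inj. subst k.
  have Eab : a = b by apply: functional_extensionality => s; apply: emb_inj; apply: H.
  subst b; by rewrite (proof_irrelevance _ Ha Hb).
by case: u => x; case: v => y //= _ E H; rewrite (key x y E H).
Qed.

Lemma P_topology : is_topology (os_open (P_of X)).
Proof.
split; [|split].
- by split => k; apply: sub_prod_True.
- move=> F HF; split => k.
  + apply: (@sub_open_ext _ _ _ (fun z => exists i : {U | F U}, proj1_sig i (inl (existT _ k z)))).
      apply: sub_prod_union => i; exact: (proj1 (HF _ (proj2_sig i)) k).
    move=> z; split; [by case=> i Hi; exists (proj1_sig i); split => //; exact: proj2_sig i|].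
    by case=> U [FU HU]; exists (exist _ U FU).
  + apply: (@sub_open_ext _ _ _ (fun z => exists i : {U | F U}, proj1_sig i (inr (existT _ k z)))).
      apply: sub_prod_union => i; exact: (proj2 (HF _ (proj2_sig i)) k).
    move=> z; split; [by case=> i Hi; exists (proj1_sig i); split => //; exact: proj2_sig i|].
    by case=> U [FU HU]; exists (exist _ U FU).
- move=> U V [HU1 HU2] [HV1 HV2]; split => k; apply: sub_prod_and; [exact: HU1|exact: HV1|exact: HU2|exact: HV2].
Qed.

Lemma P_open_ext (U V : os_car (P_of X) -> Prop) :
  os_open (P_of X) U -> (forall u, U u <-> V u) -> os_open (P_of X) V.
Proof.
move=> [H1 H2] E; split => k; [apply: sub_open_ext (H1 k) _| apply: sub_open_ext (H2 k) _];
  move=> z; exact: E.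
Qed.

Hypothesis Hclosed : forall k : 'I_n.+1, prod_open (fun x : S -> Mcar k => ~ Y k x).

Lemma P_icompact : icompact (P_of X) (fun _ => True).
Proof.
move=> I G HG Hcov.
have side_part : forall b : bool, exists L, forall k : 'I_n.+1, k \in enum 'I_n.+1 ->
    forall z, exists i, List.In i L /\ G i ((if b then inl else inr) (existT _ k z)).
  move=> b; apply: (@list_choice _ _ _ (fun (k : 'I_n.+1) L => forall z, exists i, List.In i L /\ G i ((if b then inl else inr) (existT _ k z)))).
    move=> k l l' Hll' H z; have [i [Hi Gi]] := H z; exists i; split => //; exact: Hll'.
  move=> k; apply: (@sub_compact S (Mcar k) (enumM k) (@enumM_all k) (Y k) (@Hclosed k) I
    (fun i z => G i ((if b then inl else inr) (existT _ k z)))).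
    by move=> i; case: b; [exact: (proj1 (HG i) k)| exact: (proj2 (HG i) k)].
  by move=> z; apply: Hcov.
have [L1 H1] := side_part true; have [L2 H2] := side_part false.
exists (L1 ++ L2) => u _.
case: u => [[k z]|[k z]].
- have [i [Hi Gi]] := H1 k (mem_enum _ k) z; exists i; split => //; apply: List.in_or_app; by left.
- have [i [Hi Gi]] := H2 k (mem_enum _ k) z; exists i; split => //; apply: List.in_or_app; by right.
Qed.

Lemma P_priestley : Priestley (P_of X).
Proof.
split; first exact: P_topology.
split; [|split].
- split; [|split].
  + by move=> u; apply/P_le_C; apply: PleC_refl.
  + move=> u v /P_le_C H1 /P_le_C H2; have [E1 [E2 E3]] := PleC_antisym H1 H2.
    by apply: toP_inj => // s; apply: E3.
  + move=> u v w /P_le_C H1 /P_le_C H2; apply/P_le_C; exact: PleC_trans H1 H2.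
- apply: icompact_os; exact: P_icompact.
- move=> u v Hn.
  have [l Hl] : exists l : list S, ~ PleC (fun s => List.In s l) (toP u) (toP v).
    apply: PleC_witness => H; apply: Hn; exact/P_le_C.
  exists (fun w => PleC (fun s => List.In s l) (toP u) (toP w)); split; last first.
    by split => //; apply: PleC_refl.
  split; [|split].
  + split => k.
    * exists (fun f : S -> Mcar k => PleC (fun s => List.In s l) (toP u) (Pt true k (fun s => emb (f s)))).
      split => // f Hf; exists l => g Hg; apply: PleC_ext Hf => //= s Hs; by rewrite Hg.
    * exists (fun f : S -> Mcar k => PleC (fun s => List.In s l) (toP u) (Pt false k (fun s => emb (f s)))).
      split => // f Hf; exists l => g Hg; apply: PleC_ext Hf => //= s Hs; by rewrite Hg.
  + split => k.
    * exists (fun f : S -> Mcar k => ~ PleC (fun s => List.In s l) (toP u) (Pt true k (fun s => emb (f s)))).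
      split => // f Hf; exists l => g Hg Hg'; apply: Hf; apply: PleC_ext Hg' => //= s Hs; by rewrite Hg.
    * exists (fun f : S -> Mcar k => ~ PleC (fun s => List.In s l) (toP u) (Pt false k (fun s => emb (f s)))).
      split => // f Hf; exists l => g Hg Hg'; apply: Hf; apply: PleC_ext Hg' => //= s Hs; by rewrite Hg.
  + move=> w w' H /P_le_C H'; apply: PleC_trans H _; exact: PleC_mono H'.
Qed.

End SubPowPriestley.

Section Transfer.
Variables (A B : OSpace) (f : os_car A -> os_car B) (g : os_car B -> os_car A).
Hypotheses (fK : cancel f g) (gK : cancel g f).
Hypotheses (fc : os_continuous f) (gc : os_continuous g).
Hypotheses (fm : os_monotone f) (gm : os_monotone g).

Lemma open_iff U : os_open A U <-> os_open B (fun b => U (g b)).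
Proof.
split; first exact: gc.
move=> /fc; have -> // : (fun a => U (g (f a))) = U.
by apply: functional_extensionality => a; rewrite fK.
Qed.

Lemma le_iff x y : os_le A x y <-> os_le B (f x) (f y).
Proof. split; first exact: fm. by move/gm; rewrite !fK. Qed.

Lemma priestley_transfer : Priestley B -> Priestley A.
Proof.
move=> [[HT [HU HI]] [[Hr [Ha Ht]] [Hc Htod]]].
split; [split; [|split]|split; [split; [|split]|split]].
- exact: (fc HT).
- move=> F HF.
  pose G V := F (fun a => V (f a)).
  have HG : forall V, G V -> os_open B V.
    move=> V GV; have := proj1 (open_iff _) (HF _ GV).
    have -> // : (fun b => V (f (g b))) = V.
    by apply: functional_extensionality => b; rewrite gK.
  have := fc (HU G HG).
  have -> // : (fun a => exists V, G V /\ V (f a)) = (fun a => exists U, F U /\ U a).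
  apply: functional_extensionality => a; apply: propositional_extensionality; split.
  + by case=> V [GV Vfa]; exists (fun a => V (f a)).
  + case=> U [FU Ua]; exists (fun b => U (g b)); rewrite /G fK; split => //.
    have -> // : (fun a => U (g (f a))) = U.
    by apply: functional_extensionality => a'; rewrite fK.
- move=> U V /open_iff HU' /open_iff HV'; apply/open_iff; exact: HI.
- by move=> x; apply/le_iff.
- by move=> x y /le_iff H1 /le_iff H2; apply: (can_inj fK); apply: Ha.
- by move=> x y z /le_iff H1 /le_iff H2; apply/le_iff; apply: Ht H2.
- move=> F HF Hcov.
  pose G V := F (fun a => V (f a)).
  have HG : forall V, G V -> os_open B V.
    move=> V GV; have := proj1 (open_iff _) (HF _ GV).
    have -> // : (fun b => V (f (g b))) = V.
    by apply: functional_extensionality => b; rewrite gK.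
  have HcovB : forall b, exists V, G V /\ V b.
    move=> b; have [U [FU Ub]] := Hcov (g b); exists (fun b => U (g b)); split => //.
    rewrite /G; have -> // : (fun a => U (g (f a))) = U.
    by apply: functional_extensionality => a'; rewrite fK.
  have [l [Hl1 Hl2]] := Hc G HG HcovB.
  exists (List.map (fun V a => V (f a)) l); split.
  + by move=> U /List.in_map_iff [V [<- HV]]; apply: Hl1.
  + move=> a; have [V [HV Vfa]] := Hl2 (f a); exists (fun a => V (f a)); split => //.
    exact: List.in_map.
- move=> x y Hn.
  have Hn' : ~ os_le B (f x) (f y) by move/le_iff.
  have [U [[HUo [HUc HUup]] [Ux Uy]]] := Htod _ _ Hn'.
  exists (fun a => U (f a)); split => //; split; [exact: fc | split; [exact: (fc HUc)|]].
  by move=> a a' Ua Haa'; apply: HUup Ua _; apply: fm.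
Qed.

End Transfer.

Section Pmap.
Variables (n : nat) (X Y : MStruct n) (phi : forall k, ms_sort X k -> ms_sort Y k).
Hypothesis Hm : is_morph phi.

Lemma P_map_cont : os_continuous (P_map phi).
Proof.
case: Hm => [Hc _] V [H1 H2]; split => k /=; exact: (Hc k _ (H1 k)) || exact: (Hc k _ (H2 k)).
Qed.

Lemma XU_le_map x y : XU_le x y -> XU_le (XU_map phi x) (XU_map phi y).
Proof.
case: Hm => [_ [_ [Hle Hlejk]]].
case: x => j a; case: y => k b /=; case=> [[e H]|[H0 [H1 H]]].
- left; destruct e; exists erefl => /=; exact: Hle.
- by right; do 2 split => //; apply: Hlejk.
Qed.

Lemma XU_g_map x : ~ in0 x -> XU_g (XU_map phi x) = XU_map phi (XU_g x).
Proof.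
case: Hm => [_ [Hg _]].
case: x => k a; rewrite /in0 /XU_g /XU_map /= => H.
have -> : (nat_of_ord k == 0) = false by apply/eqP.
by rewrite /= Hg //; case: (nat_of_ord k) H => //.
Qed.

Lemma P_map_mono : os_monotone (P_map phi).
Proof.
case=> x; case=> y; rewrite /= /P_le.
- case=> [H|[Hx [Hy H]]]; [left; exact: XU_le_map | right].
  by split => //; split => //; rewrite XU_g_map //; apply: XU_le_map.
- case=> [[Hx [Hy H]]|[[Hx [Hy H]]|[Hx [Hy H]]]].
  + by left; split => //; split => //; rewrite XU_g_map //; apply: XU_le_map.
  + by right; left; split => //; split => //; rewrite XU_g_map //; apply: XU_le_map.
  + right; right; split => //; split => //; rewrite !XU_g_map //.
    by case: H => H; [left|right]; apply: XU_le_map.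
- by [].
- case=> [H|[Hx [Hy H]]]; [left; exact: XU_le_map | right].
  by split => //; split => //; rewrite XU_g_map //; apply: XU_le_map.
Qed.

End Pmap.

Lemma P_map_id n (X : MStruct n) (u : os_car (P_of X)) :
  P_map (fun k (x : ms_sort X k) => x) u = u.
Proof. by case: u => [[k z]|[k z]]. Qed.

Lemma P_map_comp n (X Y Z : MStruct n) (phi : forall k, ms_sort X k -> ms_sort Y k)
  (psi : forall k, ms_sort Y k -> ms_sort Z k) (u : os_car (P_of X)) :
  P_map (fun k x => psi k (phi k x)) u = P_map psi (P_map phi u).
Proof. by case: u => [[k z]|[k z]]. Qed.

Lemma Xn_priestley n (X : MStruct n) : in_Xn X -> Priestley (P_of X).
Proof.
move=> [S [Y [HY [_ [Hcl [phi [psi [Hphi [Hpsi [K1 K2]]]]]]]]]].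
apply: (@priestley_transfer _ _ (P_map phi) (P_map psi)).
- by case=> [[k z]|[k z]]; rewrite /= /XU_map /= K1.
- by case=> [[k z]|[k z]]; rewrite /= /XU_map /= K2.
- exact: P_map_cont.
- exact: P_map_cont.
- exact: P_map_mono.
- exact: P_map_mono.
- exact: P_priestley.
Qed.


Definition km6 := mk_meet kle6 Bot6.
Definition kj6 := mk_join kle6 Top6.
Definition tm6 := mk_meet tle6 F6.
Definition tj6 := mk_join tle6 T6.
Definition is4 (m : M6) : bool := match m with Zero6 | One6 => false | _ => true end.
Definition fU (k i : nat) : M6 := if k == 0 then F6 else if (i < k)%N then Zero6 else F6.
Definition tU (k i : nat) : M6 := if k == 0 then T6 else if (i < k)%N then One6 else T6.
Definition f0U (z : bool) : M6 := if z then F6 else Zero6.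
Definition t0U (z : bool) : M6 := if z then T6 else One6.

Lemma emb_km m (u v : Mcar m) : emb (Mkmeet u v) = km6 (emb u) (emb v).
Proof. by case: m u v => [|m] /=; case; case. Qed.
Lemma emb_kj m (u v : Mcar m) : emb (Mkjoin u v) = kj6 (emb u) (emb v).
Proof. by case: m u v => [|m] /=; case; case. Qed.
Lemma emb_tm m (u v : Mcar m) : emb (Mtmeet u v) = tm6 (emb u) (emb v).
Proof. by case: m u v => [|m] /=; case; case. Qed.
Lemma emb_tj m (u v : Mcar m) : emb (Mtjoin u v) = tj6 (emb u) (emb v).
Proof. by case: m u v => [|m] /=; case; case. Qed.
Lemma emb_neg m (u : Mcar m) : emb (Mneg u) = neg6 (emb u).
Proof. by case: m u => [|m] /=; case. Qed.
Lemma emb_top m : emb (Mtop m) = Top6. Proof. by case: m. Qed.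
Lemma emb_bot m : emb (Mbot m) = Bot6. Proof. by case: m. Qed.
Lemma emb_f m i : emb (Mf m i) = fU m i. Proof. by case: m => [|m] //=; rewrite /fU /=; case: ifP. Qed.
Lemma emb_t m i : emb (Mt m i) = tU m i. Proof. by case: m => [|m] //=; rewrite /tU /=; case: ifP. Qed.

Section Uhom.
Variables (n : nat) (A : Alg n).

Record uhom (k : nat) (X : acar A -> M6) : Prop := UHom {
  uh_km : forall a b, X (a_kmeet A a b) = km6 (X a) (X b);
  uh_kj : forall a b, X (a_kjoin A a b) = kj6 (X a) (X b);
  uh_tm : forall a b, X (a_meet A a b) = tm6 (X a) (X b);
  uh_tj : forall a b, X (a_join A a b) = tj6 (X a) (X b);
  uh_neg : forall a, X (a_neg A a) = neg6 (X a);
  uh_top : X (a_top A) = Top6;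
  uh_bot : X (a_bot A) = Bot6;
  uh_f : forall i : 'I_n.+1, X (a_f A i) = fU k i;
  uh_t : forall i : 'I_n.+1, X (a_t A i) = tU k i;
  uh_4 : forall a, (k == 0) ==> is4 (X a) }.

Lemma hom_uhom (k : 'I_n.+1) (x : acar A -> Mcar k) :
  is_hom A (Malg k) x -> uhom k (fun a => emb (x a)).
Proof.
move=> [H1 [H2 [H3 [H4 [H5 [H6 [H7 [H8 H9]]]]]]]]; constructor.
- by move=> a b; rewrite H1 emb_km.
- by move=> a b; rewrite H2 emb_kj.
- by move=> a b; rewrite H3 emb_tm.
- by move=> a b; rewrite H4 emb_tj.
- by move=> a; rewrite H5 emb_neg.
- by rewrite H6 emb_top.
- by rewrite H9 emb_bot.
- by move=> i; rewrite H7 emb_f.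
- by move=> i; rewrite H8 emb_t.
- move=> a; move: (x a); case: k {x H1 H2 H3 H4 H5 H6 H7 H8 H9} => [[|k] Hk] //=; by case.
Qed.

Lemma uh_f0 k X : uhom k X -> X (a_f A ord0) = f0U (k == 0).
Proof. by move=> U; rewrite (uh_f U) /fU /f0U; case: k {U}. Qed.
Lemma uh_t0 k X : uhom k X -> X (a_t A ord0) = t0U (k == 0).
Proof. by move=> U; rewrite (uh_t U) /tU /t0U; case: k {U}. Qed.

Definition tm3 a := a_neg A (a_kmeet A (a_t A ord0) (a_meet A (a_top A) a)).
Definition tm4 a := a_neg A (a_kmeet A (a_f A ord0) (a_join A (a_top A) a)).
Definition tm5 a := a_kjoin A (a_f A ord0) a.
Definition tm6' a := a_kjoin A (a_t A ord0) a.
Definition tm7 a := a_neg A (a_kjoin A (a_f A ord0) a).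
Definition tm8 a := a_neg A (a_kjoin A (a_t A ord0) a).
Definition tm9 a := a_kmeet A (a_t A ord0) (a_meet A (a_top A) a).
Definition tm10 a := a_kmeet A (a_f A ord0) (a_join A (a_top A) a).
Definition bt1 a b := a_kmeet A (a_kjoin A (a_f A ord0) a) (a_kjoin A (a_t A ord0) b).
Definition bt2 a b := a_neg A (a_kmeet A (a_kjoin A (a_f A ord0) b) (a_kjoin A (a_t A ord0) a)).
Definition bt3 a b := a_kmeet A (a_kjoin A (a_f A ord0) a) (a_neg A (a_kjoin A (a_f A ord0) b)).
Definition bt4 a b := a_kmeet A (a_kjoin A (a_t A ord0) b) (a_neg A (a_kjoin A (a_t A ord0) a)).

Section Ev.
Variables (k : nat) (X : acar A -> M6) (U : uhom k X).
Let z := (k == 0).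
Lemma ev3 a : X (tm3 a) = neg6 (km6 (t0U z) (tm6 Top6 (X a))).
Proof. by rewrite /tm3 (uh_neg U) (uh_km U) (uh_t0 U) (uh_tm U) (uh_top U). Qed.
Lemma ev4 a : X (tm4 a) = neg6 (km6 (f0U z) (tj6 Top6 (X a))).
Proof. by rewrite /tm4 (uh_neg U) (uh_km U) (uh_f0 U) (uh_tj U) (uh_top U). Qed.
Lemma ev5 a : X (tm5 a) = kj6 (f0U z) (X a).
Proof. by rewrite /tm5 (uh_kj U) (uh_f0 U). Qed.
Lemma ev6 a : X (tm6' a) = kj6 (t0U z) (X a).
Proof. by rewrite /tm6' (uh_kj U) (uh_t0 U). Qed.
Lemma ev7 a : X (tm7 a) = neg6 (kj6 (f0U z) (X a)).
Proof. by rewrite /tm7 (uh_neg U) (uh_kj U) (uh_f0 U). Qed.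
Lemma ev8 a : X (tm8 a) = neg6 (kj6 (t0U z) (X a)).
Proof. by rewrite /tm8 (uh_neg U) (uh_kj U) (uh_t0 U). Qed.
Lemma ev9 a : X (tm9 a) = km6 (t0U z) (tm6 Top6 (X a)).
Proof. by rewrite /tm9 (uh_km U) (uh_t0 U) (uh_tm U) (uh_top U). Qed.
Lemma ev10 a : X (tm10 a) = km6 (f0U z) (tj6 Top6 (X a)).
Proof. by rewrite /tm10 (uh_km U) (uh_f0 U) (uh_tj U) (uh_top U). Qed.
Lemma evb1 a b : X (bt1 a b) = km6 (kj6 (f0U z) (X a)) (kj6 (t0U z) (X b)).
Proof. by rewrite /bt1 (uh_km U) !(uh_kj U) (uh_f0 U) (uh_t0 U). Qed.
Lemma evb2 a b : X (bt2 a b) = neg6 (km6 (kj6 (f0U z) (X b)) (kj6 (t0U z) (X a))).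
Proof. by rewrite /bt2 (uh_neg U) (uh_km U) !(uh_kj U) (uh_f0 U) (uh_t0 U). Qed.
Lemma evb3 a b : X (bt3 a b) = km6 (kj6 (f0U z) (X a)) (neg6 (kj6 (f0U z) (X b))).
Proof. by rewrite /bt3 (uh_km U) (uh_neg U) !(uh_kj U) (uh_f0 U). Qed.
Lemma evb4 a b : X (bt4 a b) = km6 (kj6 (t0U z) (X b)) (neg6 (kj6 (t0U z) (X a))).
Proof. by rewrite /bt4 (uh_km U) (uh_neg U) !(uh_kj U) (uh_t0 U). Qed.
End Ev.

End Uhom.

Definition omega (b z : bool) (m : M6) : bool :=
  match b, z with
  | true, true => match m with Top6 | T6 | One6 => true | _ => false end
  | false, true => match m with Bot6 | T6 | One6 => true | _ => false end
  | true, false => match m with One6 => true | _ => false end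
  | false, false => match m with Zero6 => false | _ => true end
  end.

Definition PhiU (S : Type) (p : pt S) (a : S) : bool := omega (side p) (srt p == 0) (v6 p a).

Lemma PleC_omega S (p q : pt S) : PleC (fun _ => True) p q -> forall a, PhiU p a -> PhiU q a.
Proof.
case: p q => [b1 j x] [b2 k y] [c [C P]] a; rewrite /PhiU /=; move: (P a I) => /=.
clear P.
do 10?[case: c C => [|c] C]; last by [].
all: move: C => /=; case Ej: (j == 0); case Ek: (k == 0); case: b1; case: b2 => //=.
all: try (by move=> C; exfalso; move: C Ej Ek; lia).
all: by move=> _; case: (x a); case: (y a).
Qed.

Ltac gath H UX UY s :=
  move: (introT implyP (H s)) (introT implyP (H (a_neg _ s)))
        (introT implyP (H (tm3 s))) (introT implyP (H (tm4 s)))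
        (introT implyP (H (tm5 s))) (introT implyP (H (tm6' s)))
        (introT implyP (H (tm7 s))) (introT implyP (H (tm8 s)))
        (introT implyP (H (tm9 s))) (introT implyP (H (tm10 s)));
  rewrite ?(ev3 UX) ?(ev3 UY) ?(ev4 UX) ?(ev4 UY) ?(ev5 UX) ?(ev5 UY) ?(ev6 UX) ?(ev6 UY)
          ?(ev7 UX) ?(ev7 UY) ?(ev8 UX) ?(ev8 UY) ?(ev9 UX) ?(ev9 UY) ?(ev10 UX) ?(ev10 UY)
          ?(uh_neg UX) ?(uh_neg UY);
  move: (uh_4 UX s) (uh_4 UY s).

Lemma omega_PleC n (A : Alg n) (p q : pt (acar A)) :
  uhom (srt p) (v6 p) -> uhom (srt q) (v6 q) -> (srt p <= n)%N -> (srt q <= n)%N ->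
  (forall a, PhiU p a -> PhiU q a) -> PleC (fun _ => True) p q.
Proof.
case: p q => [b1 j X] [b2 k Y]; rewrite /PhiU /=; move=> UX UY Hj Hk H.
have Ht := H (a_top A); rewrite (uh_top UX) (uh_top UY) in Ht.
have Hb := H (a_bot A); rewrite (uh_bot UX) (uh_bot UY) in Hb.
have Sjk : b1 -> b2 -> j != 0 -> k != 0 -> (j <= k)%N.
  move=> E1 E2 Ej Ek; have := H (a_t A (inord j.-1)).
  rewrite (uh_t UX) (uh_t UY) inordK; last lia.
  rewrite /tU (negbTE Ej) (negbTE Ek) E1 E2 /=.
  have -> : (j.-1 < j)%N by lia.
  by case: (ltnP j.-1 k) => h /=; [lia | move=> /(_ isT)].
have Skj : ~~ b1 -> ~~ b2 -> j != 0 -> k != 0 -> (k <= j)%N.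
  move=> E1 E2 Ej Ek; have := H (a_f A (inord j)).
  rewrite (uh_f UX) (uh_f UY) inordK; last lia.
  rewrite /fU (negbTE Ej) (negbTE Ek) (negbTE E1) (negbTE E2) /= ltnn.
  by case: (ltnP j k) => h /=; [move=> /(_ isT) | lia].
case: (eqVneq j 0) => [Ej|Ej]; [subst j|]; (case: (eqVneq k 0) => [Ek|Ek]; [subst k|]);
  case: b1 H Ht Hb Sjk Skj; case: b2 => H Ht Hb Sjk Skj; rewrite ?(negbTE Ej) ?(negbTE Ek) /= in Ht Hb.
- exists 0; split => // s _ /=; gath H UX UY s; case: (X s); case: (Y s); fin.
- by exfalso; move: Ht => /(_ isT).
- by exfalso; move: Hb => /(_ isT).
- exists 3; split => // s _ /=; gath H UX UY s; case: (X s); case: (Y s); fin.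
- by exfalso; move: Ht => /(_ isT).
- exists 7; split; first by rewrite /= Ek.
  move=> s _ /=; gath H UX UY s; rewrite ?(negbTE Ek); case: (X s); case: (Y s); fin.
- by exfalso; move: Hb => /(_ isT).
- exists 5; split; first by rewrite /= Ek.
  move=> s _ /=; gath H UX UY s; rewrite ?(negbTE Ek); case: (X s); case: (Y s); fin.
- exists 2; split; first by rewrite /= Ej.
  move=> s _ /=; gath H UX UY s; rewrite ?(negbTE Ej); case: (X s); case: (Y s); fin.
- exists 6; split; first by rewrite /= Ej.
  move=> s _ /=; gath H UX UY s; rewrite ?(negbTE Ej); case: (X s); case: (Y s); fin.
- by exfalso; move: Hb => /(_ isT).
- by exfalso; move: Ht => /(_ isT).
- have := Sjk isT isT Ej Ek; case: (ltngtP j k) => // [hlt|heq] _.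
  + exists 1; split; first by rewrite /= hlt; lia.
    move=> s _ /=; gath H UX UY s; rewrite ?(negbTE Ej) ?(negbTE Ek); case: (X s); case: (Y s); fin.
  + subst k; exists 0; split; first by rewrite /= eqxx.
    move=> s _ /=; gath H UX UY s; rewrite ?(negbTE Ej); case: (X s); case: (Y s); fin.
- case: (classic (forall s, kle6 (g6' (X s)) (g6' (Y s)))) => [Hall|Hnot].
    by exists 8; split; [rewrite /= Ej Ek | move=> s _ /=; exact: Hall].
  have [a0 Ha0] := not_all_ex_not _ _ Hnot.
  exists 9; split; first by rewrite /= Ej Ek.
  move=> s _ /=.
  move: (introT negP Ha0) (introT implyP (H (bt1 a0 s))) (introT implyP (H (bt2 a0 s)))
        (introT implyP (H (bt3 a0 s))) (introT implyP (H (bt4 a0 s))).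
  rewrite ?(evb1 UX) ?(evb1 UY) ?(evb2 UX) ?(evb2 UY) ?(evb3 UX) ?(evb3 UY) ?(evb4 UX) ?(evb4 UY).
  gath H UX UY a0.
  rewrite ?(negbTE Ej) ?(negbTE Ek).
  case: (X a0); case: (Y a0); simpl; (try by intros; discriminate);
    case: (X s); case: (Y s); fin.
- by exfalso; move: Hb => /(_ isT).
- have := Skj isT isT Ej Ek; case: (ltngtP k j) => // [hlt|heq] _.
  + exists 4; split; first by rewrite /= hlt; lia.
    move=> s _ /=; gath H UX UY s; rewrite ?(negbTE Ej) ?(negbTE Ek); case: (X s); case: (Y s); fin.
  + subst k; exists 3; split; first by rewrite /= eqxx.
    move=> s _ /=; gath H UX UY s; rewrite ?(negbTE Ej); case: (X s); case: (Y s); fin.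
Qed.

Definition HYA n (A : Alg n) := (fun (k : 'I_n.+1) (x : acar A -> Mcar k)
  (H : is_hom A (Malg k) x) => hom_comp H (gM_hom k)).

Section HIso.
Variables (n : nat) (A : Alg n).
Local Notation PA := (P_of (D_of A)).

Definition tp (u : os_car PA) : pt (acar A) := @toP n (acar A) _ (@HYA n A) u.

Lemma tp_good u : uhom (srt (tp u)) (v6 (tp u)) /\ (srt (tp u) <= n)%N.
Proof.
by case: u => [[k [x Hx]]|[k [x Hx]]]; rewrite /tp /toP /kx /fx /=;
  split; [exact: hom_uhom Hx| rewrite -ltnS | exact: hom_uhom Hx| rewrite -ltnS].
Qed.

Lemma omega_tm b z u v : omega b z (tm6 u v) = omega b z u && omega b z v.
Proof. by case: b; case: z; case: u; case: v. Qed.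
Lemma omega_tj b z u v : omega b z (tj6 u v) = omega b z u || omega b z v.
Proof. by case: b; case: z; case: u; case: v. Qed.

Lemma uhom_bl k X b : uhom (A:=A) k X -> is_bl_hom (fun a => omega b (k == 0) (X a)).
Proof.
move=> U; split; [|split; [|split]].
- by move=> a a'; rewrite (uh_tm U) omega_tm.
- by move=> a a'; rewrite (uh_tj U) omega_tj.
- by rewrite (uh_f0 U); case: b; case: (k == 0).
- by rewrite (uh_t0 U); case: b; case: (k == 0).
Qed.

Lemma Phi_bl u : is_bl_hom (PhiU (tp u)).
Proof. by have [U _] := tp_good u; apply: uhom_bl U. Qed.

Definition Phi (u : os_car PA) : os_car (H_flat A) := exist _ (PhiU (tp u)) (Phi_bl u).

Lemma Phi_le_iff u v : P_le u v <-> (forall a, PhiU (tp u) a -> PhiU (tp v) a).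
Proof.
split.
- by move/(@P_le_C n (acar A) _ (@HYA n A) u v); apply: PleC_omega.
- move=> H; apply/(@P_le_C n (acar A) _ (@HYA n A) u v).
  have [Uu Hu] := tp_good u; have [Uv Hv] := tp_good v.
  exact: omega_PleC Uu Uv Hu Hv H.
Qed.

Lemma Phi_inj u v : PhiU (tp u) = PhiU (tp v) -> u = v.
Proof.
move=> E.
have H1 : P_le u v by apply/Phi_le_iff; rewrite E.
have H2 : P_le v u by apply/Phi_le_iff; rewrite E.
move/(@P_le_C n (acar A) _ (@HYA n A) u v): H1 => H1.
move/(@P_le_C n (acar A) _ (@HYA n A) v u): H2 => H2.
have [E1 [E2 E3]] := PleC_antisym H1 H2.
by apply: (@toP_inj n (acar A) _ (@HYA n A)) => // s; apply: E3.
Qed.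

Lemma Phi_coord_open (P : bool -> Prop) a : os_open PA (fun u => P (PhiU (tp u) a)).
Proof.
split => k.
- exists (fun f : acar A -> Mcar k => P (omega true (nat_of_ord k == 0) (emb (f a)))); split => //.
  by move=> f Hf; exists (a :: nil) => g Hg; rewrite Hg //; left.
- exists (fun f : acar A -> Mcar k => P (omega false (nat_of_ord k == 0) (emb (f a)))); split => //.
  by move=> f Hf; exists (a :: nil) => g Hg; rewrite Hg //; left.
Qed.

Lemma Phi_cont : os_continuous Phi.
Proof.
move=> V [U [HU EU]]; split => k.
- exists (fun f : acar A -> Mcar k => U (fun a => omega true (nat_of_ord k == 0) (emb (f a)))).
  split; last by move=> z; rewrite EU.
  move=> f Hf; have [l Hl] := HU _ Hf; exists l => g Hg; apply: Hl => s Hs; by rewrite Hg.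
- exists (fun f : acar A -> Mcar k => U (fun a => omega false (nat_of_ord k == 0) (emb (f a)))).
  split; last by move=> z; rewrite EU.
  move=> f Hf; have [l Hl] := HU _ Hf; exists l => g Hg; apply: Hl => s Hs; by rewrite Hg.
Qed.

Lemma hom_closed (k : 'I_n.+1) : prod_open (fun x : acar A -> Mcar k => ~ is_hom A (Malg k) x).
Proof.
move=> x Hx; apply: NNPP => Hno; apply: Hx.
have key : forall l : list (acar A), (forall y : acar A -> Mcar k,
    (forall s, List.In s l -> y s = x s) -> is_hom A (Malg k) y -> False) -> False.
  by move=> l Hl; apply: Hno; exists l => y Hy Hh; apply: (Hl y Hy Hh).
have op2 : forall (op : acar A -> acar A -> acar A) (mop : Mcar k -> Mcar k -> Mcar k),
    (forall y, is_hom A (Malg k) y -> forall a b, y (op a b) = mop (y a) (y b)) ->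
    forall a b, x (op a b) = mop (x a) (x b).
  move=> op mop Hop a b; apply: NNPP => Hne.
  apply: (key (op a b :: a :: b :: nil)) => y Hy /Hop /(_ a b) E; apply: Hne.
  by rewrite -!Hy ?E //=; tauto.
have op1 : forall (op : acar A -> acar A) (mop : Mcar k -> Mcar k),
    (forall y, is_hom A (Malg k) y -> forall a, y (op a) = mop (y a)) ->
    forall a, x (op a) = mop (x a).
  move=> op mop Hop a; apply: NNPP => Hne.
  apply: (key (op a :: a :: nil)) => y Hy /Hop /(_ a) E; apply: Hne.
  by rewrite -!Hy ?E //=; tauto.
have op0 : forall (c : acar A) (m : Mcar k),
    (forall y, is_hom A (Malg k) y -> y c = m) -> x c = m.
  move=> c m Hc; apply: NNPP => Hne.
  apply: (key (c :: nil)) => y Hy /Hc E; apply: Hne.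
  by rewrite -Hy ?E //=; tauto.
split; [|split; [|split; [|split; [|split; [|split; [|split; [|split]]]]]]].
- by apply: op2 => y [H _].
- by apply: op2 => y [_ [H _]].
- by apply: op2 => y [_ [_ [H _]]].
- by apply: op2 => y [_ [_ [_ [H _]]]].
- by apply: op1 => y [_ [_ [_ [_ [H _]]]]].
- by apply: op0 => y [_ [_ [_ [_ [_ [H _]]]]]].
- by move=> i; apply: op0 => y [_ [_ [_ [_ [_ [_ [H _]]]]]]].
- by move=> i; apply: op0 => y [_ [_ [_ [_ [_ [_ [_ [H _]]]]]]]].
- by apply: op0 => y [_ [_ [_ [_ [_ [_ [_ [_ H]]]]]]]].
Qed.

Lemma PA_icompact : icompact PA (fun _ => True).
Proof. exact: (@P_icompact n (acar A) _ (@HYA n A) hom_closed). Qed.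

Lemma image_closed (K : os_car PA -> Prop) (h : acar A -> bool) :
  icompact PA K -> (forall u, K u -> PhiU (tp u) <> h) ->
  exists la : list (acar A), forall u, K u -> exists a, List.In a la /\ PhiU (tp u) a <> h a.
Proof.
move=> HK Hne.
apply: (HK (acar A) (fun a u => PhiU (tp u) a <> h a)).
  by move=> a; apply: (Phi_coord_open (fun b => b <> h a)).
move=> u Ku; apply: NNPP => Hn; apply: (Hne u Ku); apply: functional_extensionality => a.
by apply: NNPP => Ha; apply: Hn; exists a.
Qed.

End HIso.

Lemma all_In T (p : pred T) l a : all p l -> List.In a l -> p a.
Proof. elim: l => [//|x l IH] /= /andP[px pl] [<-|H] //; exact: IH. Qed.
Lemma has_In T (p : pred T) l a : ~~ has p l -> List.In a l -> ~~ p a.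
Proof. elim: l => [//|x l IH] /=; rewrite negb_or => /andP[px pl] [<-|H] //; exact: IH. Qed.
Lemma In_filter T (p : pred T) l a : List.In a l -> p a -> List.In a (filter p l).
Proof. elim: l => [//|x l IH] /= [->|H] pa; first by rewrite pa; left. case: (p x) => //=; [right|]; exact: IH. Qed.
Lemma all_filter_self T (p : pred T) l : all p (filter p l).
Proof. elim: l => [//|x l IH] /=; case E: (p x) => //=; by rewrite E. Qed.
Lemma has_filter_neg T (p : pred T) l : ~~ has p (filter (fun a => ~~ p a) l).
Proof. elim: l => [//|x l IH] /=; case E: (p x) => //=; by rewrite E. Qed.

Section HIso2.
Variables (n : nat) (A : Alg n).
Local Notation PA := (P_of (D_of A)).

Lemma proj_hom I (c : I -> 'I_n.+1) (e : acar A -> acar (Mprod c)) :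
  is_hom A (Mprod c) e -> forall i, is_hom A (Malg (c i)) (fun a => e a i).
Proof.
move=> [H1 [H2 [H3 [H4 [H5 [H6 [H7 [H8 H9]]]]]]]] i.
split; [|split; [|split; [|split; [|split; [|split; [|split; [|split]]]]]]].
- by move=> x y; rewrite H1.
- by move=> x y; rewrite H2.
- by move=> x y; rewrite H3.
- by move=> x y; rewrite H4.
- by move=> x; rewrite H5.
- by rewrite H6.
- by move=> j; rewrite H7.
- by move=> j; rewrite H8.
- by rewrite H9.
Qed.

Lemma sep_fin z u v : (z ==> is4 u) -> (z ==> is4 v) -> tm6 u v <> u ->
  [|| omega true z u && ~~ omega true z v, omega false z u && ~~ omega false z v,
      omega true true (g6' u) && ~~ omega true true (g6' v) |
      omega false true (g6' u) && ~~ omega false true (g6' v)].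
Proof. by case: z; case: u; case: v. Qed.

Lemma sep (HA : in_Vn A) a b : a_meet A a b <> a ->
  exists u : os_car PA, PhiU (tp u) a /\ ~~ PhiU (tp u) b.
Proof.
case: HA => I [c [e [He Hinj]]] Hne.
have [i Hi] : exists i, e (a_meet A a b) i <> e a i.
  apply: NNPP => H; apply: Hne; apply: Hinj; apply: functional_extensionality_dep => i.
  by apply: NNPP => Hi; apply: H; exists i.
have Hx := proj_hom He i.
have U := hom_uhom Hx.
have Hne' : tm6 (emb (e a i)) (emb (e b i)) <> emb (e a i).
  move=> E; apply: Hi; apply: emb_inj.
  by move: (uh_tm U a b) => /= ->.
have := sep_fin (uh_4 U a) (uh_4 U b) Hne'.
case/or4P => /andP[H1 H2].
- by exists (inl (existT _ (c i) (exist _ (fun a => e a i) Hx))).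
- by exists (inr (existT _ (c i) (exist _ (fun a => e a i) Hx))).
- exists (inl (existT _ ord0 (exist _ (fun s => gM (e s i)) (HYA Hx)))).
  by split; [move: H1 | move: H2]; rewrite -emb_gM => H; exact: H.
- exists (inr (existT _ ord0 (exist _ (fun s => gM (e s i)) (HYA Hx)))).
  by split; [move: H1 | move: H2]; rewrite -emb_gM => H; exact: H.
Qed.

Lemma bl_meetL (h : acar A -> bool) (l : seq (acar A)) : is_bl_hom h ->
  h (foldr (a_meet A) (a_t A ord0) l) = all h l.
Proof. by move=> [Hm [_ [_ Ht]]]; elim: l => [|x l IH] //=; rewrite Hm IH. Qed.
Lemma bl_joinL (h : acar A -> bool) (l : seq (acar A)) : is_bl_hom h ->
  h (foldr (a_join A) (a_f A ord0) l) = has h l.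
Proof. by move=> [_ [Hj [Hf _]]]; elim: l => [|x l IH] //=; rewrite Hj IH. Qed.

Lemma Phi_surj (HA : in_Vn A) (h : os_car (H_flat A)) : exists u, Phi u = h.
Proof.
apply: NNPP => Hno.
have Hne : forall u, (fun _ => True) u -> PhiU (tp u) <> proj1_sig h.
  move=> u _ E; apply: Hno; exists u.
  apply: eq_sig_hprop; [by move=> x p q; apply: proof_irrelevance | exact: E].
have [la Hla] := image_closed (@PA_icompact n A) Hne.
set l1 := filter (proj1_sig h) la; set l0 := filter (fun a => ~~ proj1_sig h a) la.
set am := foldr (a_meet A) (a_t A ord0) l1; set aj := foldr (a_join A) (a_f A ord0) l0.
have hbl := proj2_sig h.
have ham : proj1_sig h am by rewrite /am bl_meetL //; exact: all_filter_self.
have haj : ~~ proj1_sig h aj by rewrite /aj bl_joinL //; exact: has_filter_neg.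
have Hmj : a_meet A am aj <> am.
  move=> E; move: ham; rewrite -E; case: hbl => [Hm _]; by rewrite Hm (negbTE haj) andbF.
have [u [Hu1 Hu2]] := sep HA Hmj.
have [a [Ha Hd]] := Hla u I; apply: Hd.
have ubl := Phi_bl u.
case Eh: (proj1_sig h a).
- move: Hu1; rewrite /am bl_meetL // => Hall; exact: (all_In Hall (In_filter Ha Eh)).
- apply/negbTE; move: Hu2; rewrite /aj bl_joinL // => Hhas.
  by apply: (has_In Hhas); apply: In_filter; rewrite ?Eh.
Qed.

Variable (HA : in_Vn A).

Definition Psi (h : os_car (H_flat A)) : os_car PA :=
  proj1_sig (constructive_indefinite_description _ (Phi_surj HA h)).

Lemma PsiK h : Phi (Psi h) = h.
Proof. by rewrite /Psi; case: constructive_indefinite_description. Qed.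

Lemma PhiK u : Psi (Phi u) = u.
Proof. apply: Phi_inj; by have := PsiK (Phi u) => /(congr1 (@proj1_sig _ _)). Qed.

Lemma Psi_cont : os_continuous Psi.
Proof.
move=> V HV.
have HK : icompact PA (fun u => ~ V u).
  apply: icompact_closed; first exact: PA_icompact.
  apply: (@P_open_ext n (acar A) _ (@HYA n A) V) => // u; split; [tauto | exact: NNPP].
exists (fun f : acar A -> bool => exists h0 : os_car (H_flat A), V (Psi h0) /\
  exists la : list (acar A), (forall u, ~ V u -> exists a, List.In a la /\ PhiU (tp u) a <> proj1_sig h0 a)
    /\ forall a, List.In a la -> f a = proj1_sig h0 a).
split.
- move=> f [h0 [Vh0 [la [Hla Hf]]]]; exists la => g Hg.
  exists h0; split => //; exists la; split => // a Ha; rewrite Hg //; exact: Hf.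
- move=> h; split.
  + move=> Vh; exists h; split => //.
    have Hne : forall u, ~ V u -> PhiU (tp u) <> proj1_sig h.
      move=> u Vu E; apply: Vu.
      have -> : u = Psi h; last exact: Vh.
      rewrite -(PhiK u); congr Psi.
      apply: eq_sig_hprop; [by move=> x p q; apply: proof_irrelevance| exact: E].
    have [la Hla] := image_closed HK Hne.
    by exists la; split.
  + move=> [h0 [Vh0 [la [Hla Hf]]]]; apply: NNPP => Hn.
    have [a [Ha Hd]] := Hla _ Hn; apply: Hd.
    rewrite -Hf //; by have /= -> := congr1 (@proj1_sig _ _) (PsiK h).
Qed.

Lemma H_iso : os_iso (H_flat A) PA.
Proof.
exists Psi, (@Phi n A); split; [exact: PsiK|split; [exact: PhiK|split; [exact: Psi_cont|split; [exact: Phi_cont|]]]].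
move=> h h'; rewrite /= Phi_le_iff.
have /= Eh := congr1 (@proj1_sig _ _) (PsiK h).
have /= Eh' := congr1 (@proj1_sig _ _) (PsiK h').
rewrite Eh Eh'; split => H a; apply/implyP; exact: H.
Qed.

End HIso2.

Theorem theorem6p2 (n : nat) (Hn : (1 <= n)%N) :
  (* P(X) is a Priestley space for every object X of X_n *)
  (forall X : MStruct n, in_Xn X -> Priestley (P_of X)) /\
  (* P(phi) is continuous and order-preserving for every morphism of X_n *)
  (forall (X Y : MStruct n) (phi : forall k, ms_sort X k -> ms_sort Y k),
      in_Xn X -> in_Xn Y -> is_morph phi ->
      os_continuous (P_map phi) /\ os_monotone (P_map phi)) /\
  (* functoriality *)
  (forall (X : MStruct n) (u : os_car (P_of X)),
      P_map (fun k (x : ms_sort X k) => x) u = u) /\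
  (forall (X Y Z : MStruct n) (phi : forall k, ms_sort X k -> ms_sort Y k)
          (psi : forall k, ms_sort Y k -> ms_sort Z k) (u : os_car (P_of X)),
      P_map (fun k x => psi k (phi k x)) u = P_map psi (P_map phi u)) /\
  (* H(A^flat) ≅ P(D(A)) *)
  (forall A : Alg n, in_Vn A -> os_iso (H_flat A) (P_of (D_of A))).
Proof.
split; first by move=> X; exact: Xn_priestley.
split; first by move=> X Y phi _ _ Hm; split; [exact: P_map_cont | exact: P_map_mono].
split; first by move=> X u; exact: P_map_id.
split; first by move=> X Y Z phi psi u; exact: P_map_comp.
by move=> A HA; exact: (H_iso HA).
Qed.
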